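(* Let $\langle k\rangle,\langle k^2\rangle,\langle k^3\rangle$ be the first three moments of a degree distribution on the nonnegative integers, with $\langle k\rangle>0$, $\langle k^2\rangle-\langle k\rangle^2>0$ and $\langle k^2\rangle>\langle k\rangle$. Define $$\alpha=\frac{\langle k^2\rangle^2-\langle k\rangle\langle k^3\rangle}{\langle k^2\rangle-\langle k\rangle^2},\qquad \beta=\frac{\langle k^3\rangle-\langle k^2\rangle\langle k\rangle}{\langle k^2\rangle-\langle k\rangle^2}-1,$$ and for a parameter $\delta>0$ consider the system of ODEs \begin{align*} \dot w&=\langle k\rangle\delta x-w,\\ \dot x&=z-(\delta+1)x+\frac{\alpha\delta}{\langle k\rangle}\cdot\frac{(1-w)x(1-3x-z)}{(1-x-z)^2}+\beta\delta\cdot\frac{x(1-3x-z)}{1-x-z},\\ \dot z&=-2z+2\delta x+\frac{2\alpha\delta}{\langle k\rangle}\cdot\frac{(1-w)x^2}{(1-x-z)^2}+2\beta\delta\cdot\frac{x^2}{1-x-z}. \end{align*} Let $\delta_c=\dfrac{\langle k\rangle}{\langle k^2\rangle-\langle k\rangle}$. Then the disease-free equilibrium $(w,x,z)=(0,0,0)$ is locally asymptotically stable if $\delta<\delta_c$ and unstable if $\delta>\delta_c$.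
   Context: This is the nondimensionalized super compact pairwise (SCPW) SIS epidemic model on a network: $w$ is the proportion of infectious nodes, $x$, $z$ are the proportions of susceptible–infectious and infectious–infectious links, and $\delta=\tau/\gamma$ is the ratio of transmission rate to recovery rate. The model arises with the conservation laws $v+w=1$ and $2x+y+z=1$ ($v$ the susceptible proportion, $y$ the susceptible–susceptible link proportion), which have been used to eliminate $v$ and $y$. Stability refers to local stability of the equilibrium of the ODE system. *)

(* Defs.v *)
From Stdlib Require Import Reals.
From Coquelicot Require Import Coquelicot.
Open Scope R_scope.

Definition degree_moments (p : nat -> R) (k1 k2 k3 : R) : Prop :=
  (forall n, 0 <= p n) /\ is_series p 1 /\
  is_series (fun n => INR n * p n) k1 /\
  is_series (fun n => INR n ^ 2 * p n) k2 /\
  is_series (fun n => INR n ^ 3 * p n) k3.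

Definition alpha (k1 k2 k3 : R) : R := (k2 ^ 2 - k1 * k3) / (k2 - k1 ^ 2).
Definition beta (k1 k2 k3 : R) : R := (k3 - k2 * k1) / (k2 - k1 ^ 2) - 1.
Definition delta_c (k1 k2 : R) : R := k1 / (k2 - k1).

Definition Fw (k1 k2 k3 d w x z : R) : R := k1 * d * x - w.
Definition Fx (k1 k2 k3 d w x z : R) : R :=
  z - (d + 1) * x
  + alpha k1 k2 k3 * d / k1 * ((1 - w) * x * (1 - 3 * x - z) / (1 - x - z) ^ 2)
  + beta k1 k2 k3 * d * (x * (1 - 3 * x - z) / (1 - x - z)).
Definition Fz (k1 k2 k3 d w x z : R) : R :=
  - 2 * z + 2 * d * x
  + 2 * alpha k1 k2 k3 * d / k1 * ((1 - w) * x ^ 2 / (1 - x - z) ^ 2)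
  + 2 * beta k1 k2 k3 * d * (x ^ 2 / (1 - x - z)).

Definition is_solution (k1 k2 k3 d : R) (T : Rbar) (w x z : R -> R) : Prop :=
  Rbar_lt 0 T /\
  (forall t, 0 <= t -> Rbar_lt t T -> 1 - x t - z t <> 0) /\
  filterlim w (at_right 0) (locally (w 0)) /\
  filterlim x (at_right 0) (locally (x 0)) /\
  filterlim z (at_right 0) (locally (z 0)) /\
  (forall t, 0 < t -> Rbar_lt t T ->
     is_derive w t (Fw k1 k2 k3 d (w t) (x t) (z t)) /\
     is_derive x t (Fx k1 k2 k3 d (w t) (x t) (z t)) /\
     is_derive z t (Fz k1 k2 k3 d (w t) (x t) (z t))).

Definition nrm3 (a b c : R) : R := Rmax (Rabs a) (Rmax (Rabs b) (Rabs c)).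

Definition dfe_stable (k1 k2 k3 d : R) : Prop :=
  forall eps, 0 < eps -> exists eta, 0 < eta /\
    forall w0 x0 z0, nrm3 w0 x0 z0 < eta ->
      (exists w x z, is_solution k1 k2 k3 d p_infty w x z /\
                     w 0 = w0 /\ x 0 = x0 /\ z 0 = z0) /\
      (forall T w x z, is_solution k1 k2 k3 d T w x z ->
         w 0 = w0 -> x 0 = x0 -> z 0 = z0 ->
         forall t, 0 <= t -> Rbar_lt t T -> nrm3 (w t) (x t) (z t) < eps).

Definition dfe_attractive (k1 k2 k3 d : R) : Prop :=
  exists eta, 0 < eta /\
    forall w x z, is_solution k1 k2 k3 d p_infty w x z ->
      nrm3 (w 0) (x 0) (z 0) < eta ->
      is_lim w p_infty 0 /\ is_lim x p_infty 0 /\ is_lim z p_infty 0.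

Definition dfe_LAS (k1 k2 k3 d : R) : Prop :=
  dfe_stable k1 k2 k3 d /\ dfe_attractive k1 k2 k3 d.

Definition dfe_unstable (k1 k2 k3 d : R) : Prop := ~ dfe_stable k1 k2 k3 d.

(* Main.v *)
Require Import Defs.
From Stdlib Require Import Reals.
From Coquelicot Require Import Coquelicot.
From Stdlib Require Import Lra Lia Classical.
Open Scope R_scope.

Lemma nrm3_ge1 a b c : Rabs a <= nrm3 a b c.
Proof. unfold nrm3; apply Rmax_l. Qed.
Lemma nrm3_ge2 a b c : Rabs b <= nrm3 a b c.
Proof. unfold nrm3; eapply Rle_trans; [|apply Rmax_r]; apply Rmax_l. Qed.
Lemma nrm3_ge3 a b c : Rabs c <= nrm3 a b c.
Proof. unfold nrm3; eapply Rle_trans; [|apply Rmax_r]; apply Rmax_r. Qed.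
Lemma nrm3_lub a b c m : Rabs a <= m -> Rabs b <= m -> Rabs c <= m -> nrm3 a b c <= m.
Proof. intros; unfold nrm3; repeat apply Rmax_lub; auto. Qed.
Lemma nrm3_lt a b c m : Rabs a < m -> Rabs b < m -> Rabs c < m -> nrm3 a b c < m.
Proof. intros; unfold nrm3; repeat apply Rmax_lub_lt; auto. Qed.
Lemma nrm3_ge0 a b c : 0 <= nrm3 a b c.
Proof. eapply Rle_trans; [apply Rabs_pos|apply nrm3_ge1]. Qed.

Lemma cont3 (g : R -> R -> R -> R) (L : R) (f1 f2 f3 : R -> R) (t : R) :
  0 <= L ->
  (forall a b c a' b' c', Rabs (g a b c - g a' b' c') <= L * nrm3 (a-a') (b-b') (c-c')) ->
  continuous f1 t -> continuous f2 t -> continuous f3 t ->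
  continuous (fun s => g (f1 s) (f2 s) (f3 s)) t.
Proof.
  intros HL Hg H1 H2 H3.
  apply filterlim_locally. intros eps.
  assert (He : 0 < eps / (L+1)) by (apply Rdiv_lt_0_compat; [apply cond_pos| lra]).
  set (e := mkposreal _ He).
  apply (proj1 (filterlim_locally _ _)) with (eps:=e) in H1.
  apply (proj1 (filterlim_locally _ _)) with (eps:=e) in H2.
  apply (proj1 (filterlim_locally _ _)) with (eps:=e) in H3.
  generalize (filter_and _ _ H1 (filter_and _ _ H2 H3)). apply filter_imp.
  intros s [B1 [B2 B3]]. change (Rabs (g (f1 s) (f2 s) (f3 s) - g (f1 t) (f2 t) (f3 t)) < eps).
  change (Rabs (f1 s - f1 t) < e) in B1.
  change (Rabs (f2 s - f2 t) < e) in B2.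
  change (Rabs (f3 s - f3 t) < e) in B3.
  eapply Rle_lt_trans; [apply Hg|].
  assert (Hn : nrm3 (f1 s - f1 t) (f2 s - f2 t) (f3 s - f3 t) < e) by (apply nrm3_lt; auto).
  simpl in Hn. pose proof (nrm3_ge0 (f1 s - f1 t) (f2 s - f2 t) (f3 s - f3 t)).
  pose proof (cond_pos eps).
  apply Rle_lt_trans with (L * (eps / (L+1))).
  apply Rmult_le_compat_l; lra.
  unfold Rdiv. rewrite <- Rmult_assoc. apply Rlt_le_trans with ((L+1) * eps * / (L+1)).
  apply Rmult_lt_compat_r. apply Rinv_0_lt_compat; lra. nra.
  right; field; lra.
Qed.

Lemma lipschitz_cont (f : R -> R) (M t : R) :
  0 <= M -> (forall a b, Rabs (f a - f b) <= M * Rabs (a - b)) -> continuous f t.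
Proof.
  intros HM Hf. apply filterlim_locally. intros eps.
  assert (He : 0 < eps / (M+1)) by (apply Rdiv_lt_0_compat; [apply cond_pos| lra]).
  exists (mkposreal _ He). intros s Hs. change (Rabs (s - t) < eps/(M+1)) in Hs.
  change (Rabs (f s - f t) < eps).
  eapply Rle_lt_trans; [apply Hf|].
  pose proof (cond_pos eps). pose proof (Rabs_pos (s - t)).
  apply Rle_lt_trans with (M * (eps / (M+1))).
  apply Rmult_le_compat_l; lra.
  unfold Rdiv. rewrite <- Rmult_assoc. apply Rlt_le_trans with ((M+1) * eps * / (M+1)).
  apply Rmult_lt_compat_r. apply Rinv_0_lt_compat; lra. nra.
  right; field; lra.
Qed.

Lemma lim_abs_bound (u : nat -> R) (l c B : R) :
  is_lim_seq u l -> (forall k, Rabs (u k - c) <= B) -> Rabs (l - c) <= B.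
Proof.
  intros Hu HB.
  assert (H1 : is_lim_seq (fun k => Rabs (u k - c)) (Rabs (l - c))).
  { apply (is_lim_seq_abs (fun k => u k - c) (l - c)).
    apply is_lim_seq_minus'; auto. apply is_lim_seq_const. }
  pose proof (is_lim_seq_le _ _ _ _ HB H1 (is_lim_seq_const B)). simpl in H. exact H.
Qed.

Lemma cont_ex_RInt (f : R -> R) : (forall t, continuous f t) -> forall a b, ex_RInt f a b.
Proof. intros Hf a b. apply (@ex_RInt_continuous R_CompleteNormedModule). intros; apply Hf. Qed.

Lemma RInt_deriv (f : R -> R) t : (forall t, continuous f t) -> is_derive (RInt f 0) t (f t).
Proof.
  intros Hf. apply is_derive_RInt with 0.
  exists (mkposreal 1 Rlt_0_1). intros. apply RInt_correct. apply cont_ex_RInt; auto.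
  apply Hf.
Qed.

Fixpoint pic (G : nat -> R -> R -> R -> R) (init : nat -> R) (n : nat) (i : nat) (t : R) : R :=
  match n with
  | O => init i
  | S m => init i + RInt (fun s => G i (pic G init m 0 s) (pic G init m 1 s) (pic G init m 2 s)) 0 t
  end.

Definition GLip (G : nat -> R -> R -> R -> R) (L M : R) :=
  0 < L /\ 0 <= M /\
  (forall i a b c a' b' c', Rabs (G i a b c - G i a' b' c') <= L * nrm3 (a-a') (b-b') (c-c')) /\
  (forall i a b c, Rabs (G i a b c) <= M).

Lemma pic_cont G init L M : GLip G L M -> forall n i t, continuous (pic G init n i) t.
Proof.
  intros [HL [HM [HGL HGM]]]. induction n; intros i t; simpl.
  - apply continuous_const.
  - apply (continuous_plus (fun _ => init i)). apply continuous_const.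
    apply ex_derive_continuous. eexists. apply RInt_deriv.
    intros s. apply cont3 with L; auto. lra.
Qed.

Lemma pic_0 G init n i : pic G init n i 0 = init i.
Proof. destruct n; simpl; auto. rewrite RInt_point. unfold zero; simpl. ring. Qed.

Definition aa (L M : R) (n : nat) (t : R) := M * L ^ n * t ^ (S n) / INR (Factorial.fact (S n)).

Lemma aa_deriv L M n s : is_derive (aa L M (S n)) s (L * aa L M n s).
Proof.
  set (c := M * L ^ (S n) / INR (Factorial.fact (S (S n)))).
  apply is_derive_ext with (fun s => c * s ^ (S (S n))).
  { intros u. unfold aa, c. simpl. unfold Rdiv. ring. }
  replace (L * aa L M n s) with (c * (INR (S (S n)) * 1 * s ^ Init.Nat.pred (S (S n)))).
  apply is_derive_scal. apply is_derive_pow. apply (@is_derive_id R_AbsRing).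
  unfold c, aa. rewrite (fact_simpl (S n)), mult_INR.
  assert (H1 := INR_fact_neq_0 (S n)).
  assert (H2 : INR (S (S n)) <> 0) by (apply not_0_INR; lia).
  simpl Init.Nat.pred. simpl pow. field. auto.
Qed.

Lemma aa_nonneg L M n t : 0 <= L -> 0 <= M -> 0 <= t -> 0 <= aa L M n t.
Proof.
  intros. unfold aa. apply Rmult_le_pos. apply Rmult_le_pos. apply Rmult_le_pos; auto.
  apply pow_le; auto. apply pow_le; auto. left; apply Rinv_0_lt_compat, INR_fact_lt_0.
Qed.

Lemma aa_mono L M n t T : 0 <= L -> 0 <= M -> 0 <= t <= T -> aa L M n t <= aa L M n T.
Proof.
  intros. unfold aa. apply Rmult_le_compat_r. left; apply Rinv_0_lt_compat, INR_fact_lt_0.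
  apply Rmult_le_compat_l. apply Rmult_le_pos; auto. apply pow_le; auto.
  apply pow_incr; lra.
Qed.

Lemma aa_ratio L M n T : aa L M (S n) T = aa L M n T * (L * T / INR (S (S n))).
Proof.
  unfold aa. rewrite (fact_simpl (S n)), mult_INR.
  assert (H1 := INR_fact_neq_0 (S n)).
  assert (H2 : INR (S (S n)) <> 0) by (apply not_0_INR; lia).
  simpl pow. field. auto.
Qed.

Lemma Gcont G L M (f1 f2 f3 : R -> R) i : GLip G L M ->
  (forall t, continuous f1 t) -> (forall t, continuous f2 t) -> (forall t, continuous f3 t) ->
  forall t, continuous (fun s => G i (f1 s) (f2 s) (f3 s)) t.
Proof.
  intros [HL [HM [HGL HGM]]] H1 H2 H3 t. apply cont3 with L; auto. lra.
Qed.

Lemma aa_cont L M n t : continuous (aa L M n) t.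
Proof. apply (@ex_derive_continuous R_AbsRing R_NormedModule). unfold aa. auto_derive. auto. Qed.

Lemma aa_cont2 L M n t : continuous (fun s => L * aa L M n s) t.
Proof. apply (@ex_derive_continuous R_AbsRing R_NormedModule). unfold aa. auto_derive. auto. Qed.

Lemma aa_at0 L M n : aa L M n 0 = 0.
Proof. unfold aa. rewrite pow_i by lia. unfold Rdiv. ring. Qed.

Lemma aa_int L M n t : RInt (fun s => L * aa L M n s) 0 t = aa L M (S n) t.
Proof.
  apply is_RInt_unique.
  replace (aa L M (S n) t) with (minus (aa L M (S n) t) (aa L M (S n) 0)).
  apply (@is_RInt_derive R_CompleteNormedModule).
  intros; apply aa_deriv.
  intros. apply aa_cont2.
  rewrite aa_at0. unfold minus, plus, opp. simpl. ring.
Qed.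

Lemma pic_diff G init L M : GLip G L M ->
  forall n i t, 0 <= t -> Rabs (pic G init (S n) i t - pic G init n i t) <= aa L M n t.
Proof.
  intros HG. pose proof HG as [HL [HM [HGL HGM]]].
  induction n; intros i t Ht.
  - simpl. rewrite (Rplus_comm (init i)). unfold Rminus. rewrite Rplus_assoc, Rplus_opp_r, Rplus_0_r.
    eapply Rle_trans. apply abs_RInt_le_const; auto.
    apply cont_ex_RInt. intros; apply continuous_const.
    unfold aa; simpl. right; field.
  - set (f1 := fun s => G i (pic G init (S n) 0 s) (pic G init (S n) 1 s) (pic G init (S n) 2 s)).
    set (f0 := fun s => G i (pic G init n 0 s) (pic G init n 1 s) (pic G init n 2 s)).
    assert (C1 : forall s, continuous f1 s) by (apply Gcont with L M; auto; apply pic_cont with L M; auto).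
    assert (C0 : forall s, continuous f0 s) by (apply Gcont with L M; auto; apply pic_cont with L M; auto).
    change (Rabs (init i + RInt f1 0 t - (init i + RInt f0 0 t)) <= aa L M (S n) t).
    assert (E : init i + RInt f1 0 t - (init i + RInt f0 0 t) = RInt (fun s => f1 s - f0 s) 0 t).
    { rewrite (RInt_minus f1 f0). unfold minus, plus, opp; simpl. ring.
      apply cont_ex_RInt; auto. apply cont_ex_RInt; auto. }
    rewrite E. clear E.
    assert (Cd : forall s, continuous (fun s => f1 s - f0 s) s).
    { intros s. apply (continuous_minus f1 f0); auto. }
    eapply Rle_trans. apply abs_RInt_le; auto. apply cont_ex_RInt; auto.
    rewrite <- aa_int. apply RInt_le; auto.
    apply cont_ex_RInt. intros; apply continuous_Rabs_comp; auto.
    apply cont_ex_RInt. intros; apply aa_cont2.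
    intros s Hs. unfold f1, f0. eapply Rle_trans. apply HGL.
    apply Rmult_le_compat_l. lra. apply nrm3_lub; apply IHn; lra.
Qed.

Lemma exN L T : 0 < L -> 0 <= T -> exists N, forall n, (N <= n)%nat -> L * T / INR (S (S n)) <= /2.
Proof.
  intros HL HT. destruct (INR_archimed 1 (2 * L * T)) as [N HN]; [lra|].
  exists N. intros n Hn. apply le_INR in Hn.
  assert (H2 : INR (S (S n)) = INR n + 2) by (rewrite !S_INR; ring).
  rewrite H2. pose proof (pos_INR n).
  apply Rmult_le_reg_r with (INR n + 2); [lra|].
  unfold Rdiv. rewrite Rmult_assoc, Rinv_l by lra. lra.
Qed.

Lemma pic_tail G init L M T N : GLip G L M -> 0 <= T ->
  (forall n, (N <= n)%nat -> L * T / INR (S (S n)) <= /2) ->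
  forall n, (N <= n)%nat -> forall k,
   aa L M (n + k) T <= aa L M n T * (/2) ^ k /\
   forall i t, 0 <= t <= T -> Rabs (pic G init (n + k) i t - pic G init n i t) <= 2 * aa L M n T * (1 - (/2) ^ k).
Proof.
  intros HG HT HN n Hn. pose proof HG as [HL [HM _]].
  induction k.
  - rewrite Nat.add_0_r. split. simpl; lra. intros. simpl.
    rewrite Rminus_diag, Rabs_R0. lra.
  - destruct IHk as [IH1 IH2]. rewrite Nat.add_succ_r.
    pose proof (aa_nonneg L M (n+k) T ltac:(lra) HM HT) as P1.
    pose proof (aa_nonneg L M n T ltac:(lra) HM HT) as P2.
    assert (R1 : aa L M (S (n + k)) T <= aa L M (n + k) T * /2).
    { rewrite aa_ratio. apply Rmult_le_compat_l; auto. apply HN. lia. }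
    split.
    + simpl. nra.
    + intros i t Ht.
      replace (pic G init (S (n + k)) i t - pic G init n i t) with
        ((pic G init (S (n + k)) i t - pic G init (n+k) i t) + (pic G init (n + k) i t - pic G init n i t)) by ring.
      eapply Rle_trans. apply Rabs_triang.
      pose proof (pic_diff G init L M HG (n+k) i t ltac:(lra)).
      pose proof (aa_mono L M (n+k) t T ltac:(lra) HM Ht).
      pose proof (IH2 i t Ht).
      replace (2 * aa L M n T * (1 - (/ 2) ^ S k)) with
        (2 * aa L M n T * (1 - (/ 2) ^ k) + aa L M n T * (/2) ^ k) by (change ((/2)^S k) with (/2 * (/2)^k); field).
      lra.
Qed.

Lemma aa_lim L M T N : 0 < L -> 0 <= M -> 0 <= T ->
  (forall n, (N <= n)%nat -> L * T / INR (S (S n)) <= /2) ->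
  forall eps, 0 < eps -> exists N1, (N <= N1)%nat /\ forall n, (N1 <= n)%nat -> aa L M n T <= eps.
Proof.
  intros HL HM HT HN eps He.
  assert (Hd : forall k, aa L M (N + k) T <= aa L M N T * (/2) ^ k).
  { induction k. rewrite Nat.add_0_r; simpl; lra.
    rewrite Nat.add_succ_r, aa_ratio.
    pose proof (aa_nonneg L M (N+k) T ltac:(lra) HM HT).
    assert (L * T / INR (S (S (N + k))) <= /2) by (apply HN; lia).
    apply Rle_trans with (aa L M (N + k) T * /2). apply Rmult_le_compat_l; auto.
    change ((/2)^S k) with (/2 * (/2)^k). lra. }
  pose proof (aa_nonneg L M N T ltac:(lra) HM HT) as P.
  destruct (pow_lt_1_zero (/2) ltac:(rewrite Rabs_pos_eq; lra) (eps / (aa L M N T + 1)))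
    as [K HK].
  { apply Rdiv_lt_0_compat; lra. }
  exists (N + K)%nat. split. lia. intros n Hn.
  replace n with (N + (n - N))%nat by lia.
  eapply Rle_trans. apply Hd.
  specialize (HK (n - N)%nat ltac:(lia)).
  rewrite Rabs_pos_eq in HK by (apply pow_le; lra).
  assert (0 <= (/2) ^ (n - N)) by (apply pow_le; lra).
  apply Rle_trans with ((aa L M N T + 1) * (eps / (aa L M N T + 1))).
  nra. right. field. lra.
Qed.

Lemma pic_close G init L M T N : GLip G L M -> 0 <= T ->
  (forall n, (N <= n)%nat -> L * T / INR (S (S n)) <= /2) ->
  forall n m, (N <= n)%nat -> (n <= m)%nat -> forall i t, 0 <= t <= T ->
  Rabs (pic G init m i t - pic G init n i t) <= 2 * aa L M n T.
Proof.
  intros HG HT HN n m Hn Hm i t Ht. pose proof HG as [HL [HM _]].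
  destruct (pic_tail G init L M T N HG HT HN n Hn (m - n)) as [_ H].
  replace (n + (m - n))%nat with m in H by lia.
  eapply Rle_trans. apply H; auto.
  pose proof (aa_nonneg L M n T ltac:(lra) HM HT).
  assert (0 <= (/2)^(m-n)) by (apply pow_le; lra).
  nra.
Qed.

Lemma pic_cauchy G init L M t i : GLip G L M -> 0 <= t ->
  ex_finite_lim_seq (fun n => pic G init n i t).
Proof.
  intros HG Ht. pose proof HG as [HL [HM _]].
  apply ex_lim_seq_cauchy_corr. intros eps.
  destruct (exN L t HL Ht) as [N HN].
  destruct (aa_lim L M t N HL HM Ht HN (eps/5)) as [N1 [HN1 HA]].
  { pose proof (cond_pos eps); lra. }
  exists N1. intros n m Hn Hm.
  pose proof (pic_close G init L M t N HG Ht HN N1 n HN1 Hn i t ltac:(lra)).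
  pose proof (pic_close G init L M t N HG Ht HN N1 m HN1 Hm i t ltac:(lra)).
  pose proof (HA N1 (le_n _)). pose proof (cond_pos eps).
  replace (pic G init n i t - pic G init m i t) with
    ((pic G init n i t - pic G init N1 i t) - (pic G init m i t - pic G init N1 i t)) by ring.
  eapply Rle_lt_trans. apply Rabs_triang. rewrite Rabs_Ropp. lra.
Qed.

Definition sol G init (i : nat) (t : R) : R := real (Lim_seq (fun n => pic G init n i (Rmax 0 t))).

Lemma sol_lim G init L M t i : GLip G L M -> 0 <= t ->
  is_lim_seq (fun n => pic G init n i t) (sol G init i t).
Proof.
  intros HG Ht. unfold sol. rewrite Rmax_right by auto.
  apply Lim_seq_correct'. apply pic_cauchy with L M; auto.
Qed.

Lemma sol_tail G init L M T N : GLip G L M -> 0 <= T ->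
  (forall n, (N <= n)%nat -> L * T / INR (S (S n)) <= /2) ->
  forall n, (N <= n)%nat -> forall i t, 0 <= t <= T ->
  Rabs (sol G init i t - pic G init n i t) <= 2 * aa L M n T.
Proof.
  intros HG HT HN n Hn i t Ht.
  apply lim_abs_bound with (fun k => pic G init (k + n) i t).
  apply (is_lim_seq_incr_n (fun k => pic G init k i t)). apply sol_lim with L M; auto; lra.
  intros k. apply pic_close with N; auto; lia.
Qed.

Lemma sol_0 G init i : sol G init i 0 = init i.
Proof.
  unfold sol. rewrite Rmax_left by lra.
  rewrite (Lim_seq_ext _ (fun _ => init i)). rewrite Lim_seq_const. reflexivity.
  intros; apply pic_0.
Qed.

Lemma pic_lip G init L M : GLip G L M -> forall n i t s,
  Rabs (pic G init n i t - pic G init n i s) <= M * Rabs (t - s).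
Proof.
  intros HG. pose proof HG as [HL [HM [HGL HGM]]].
  intros n i.
  assert (H : forall t s, s <= t -> Rabs (pic G init n i t - pic G init n i s) <= M * Rabs (t - s)).
  { intros t s Hst. destruct n; simpl.
    - rewrite Rminus_diag, Rabs_R0. pose proof (Rabs_pos (t - s)). nra.
    - set (f := fun s0 => G i (pic G init n 0 s0) (pic G init n 1 s0) (pic G init n 2 s0)).
      assert (Cf : forall u, continuous f u) by (apply Gcont with L M; auto; apply pic_cont with L M; auto).
      rewrite <- (RInt_Chasles f 0 s t) by (apply cont_ex_RInt; auto).
      assert (E : forall a b c : R, a + plus b c - (a + b) = c) by (intros; unfold plus; simpl; ring).
      rewrite E.
      rewrite (Rabs_pos_eq (t - s)) by lra. rewrite Rmult_comm.
      apply abs_RInt_le_const; auto; try (apply cont_ex_RInt; auto). intros; apply HGM. }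
  intros t s. destruct (Rle_dec s t). auto.
  rewrite Rabs_minus_sym, (Rabs_minus_sym t). apply H. lra.
Qed.

Lemma Rmax0_lip t s : Rabs (Rmax 0 t - Rmax 0 s) <= Rabs (t - s).
Proof.
  unfold Rmax. destruct (Rle_dec 0 t), (Rle_dec 0 s);
  unfold Rabs; repeat destruct Rcase_abs; lra.
Qed.

Lemma sol_lip G init L M : GLip G L M -> forall i t s,
  Rabs (sol G init i t - sol G init i s) <= M * Rabs (t - s).
Proof.
  intros HG i t s. pose proof HG as [HL [HM _]].
  assert (E : forall u, sol G init i u = sol G init i (Rmax 0 u)).
  { intros u. unfold sol. f_equal. apply Lim_seq_ext. intros. f_equal.
    unfold Rmax at 2. destruct (Rle_dec 0 (Rmax 0 u)). auto.
    exfalso; apply n0; apply Rmax_l. }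
  rewrite (E t), (E s).
  replace (sol G init i (Rmax 0 t) - sol G init i (Rmax 0 s)) with
     ((sol G init i (Rmax 0 t) - sol G init i (Rmax 0 s)) - 0) by ring.
  apply Rle_trans with (M * Rabs (Rmax 0 t - Rmax 0 s)).
  apply lim_abs_bound with (fun n => pic G init n i (Rmax 0 t) - pic G init n i (Rmax 0 s)).
  apply is_lim_seq_minus'; apply sol_lim with L M; auto; apply Rmax_l.
  intros k. rewrite Rminus_0_r. apply pic_lip with L; auto.
  apply Rmult_le_compat_l; auto. apply Rmax0_lip.
Qed.

Lemma sol_cont G init L M : GLip G L M -> forall i t, continuous (sol G init i) t.
Proof.
  intros HG i t. pose proof HG as [HL [HM _]].
  apply lipschitz_cont with M; auto. intros; apply sol_lip with L; auto.
Qed.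

Lemma small_zero x : (forall eps, 0 < eps -> Rabs x <= eps) -> x = 0.
Proof.
  intros H. destruct (Req_dec x 0); auto.
  pose proof (Rabs_pos_lt x H0). specialize (H (Rabs x / 2) ltac:(lra)). lra.
Qed.

Lemma sol_int G init L M : GLip G L M -> forall i t, 0 <= t ->
  sol G init i t = init i + RInt (fun s => G i (sol G init 0 s) (sol G init 1 s) (sol G init 2 s)) 0 t.
Proof.
  intros HG i t Ht. pose proof HG as [HL [HM [HGL HGM]]].
  set (Gs := fun s => G i (sol G init 0 s) (sol G init 1 s) (sol G init 2 s)).
  assert (CGs : forall u, continuous Gs u) by (apply Gcont with L M; auto; apply sol_cont with L M; auto).
  apply Rminus_diag_uniq. apply small_zero. intros eps He.
  destruct (exN L t HL Ht) as [N HN].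
  set (e' := eps / (2 + 2 * t * L + 1)).
  assert (He' : 0 < e') by (unfold e'; apply Rdiv_lt_0_compat; nra).
  destruct (aa_lim L M t N HL HM Ht HN e' He') as [N1 [HN1 HA]].
  set (fn := fun s => G i (pic G init N1 0 s) (pic G init N1 1 s) (pic G init N1 2 s)).
  assert (Cfn : forall u, continuous fn u) by (apply Gcont with L M; auto; apply pic_cont with L M; auto).
  assert (T1 : Rabs (sol G init i t - pic G init (S N1) i t) <= 2 * e').
  { eapply Rle_trans. apply sol_tail with (L := L) (M := M) (T := t) (N := N); auto; try lia; lra.
    pose proof (HA (S N1) ltac:(lia)). lra. }
  assert (T2 : Rabs (pic G init (S N1) i t - (init i + RInt Gs 0 t)) <= t * (L * (2 * e'))).
  { change (pic G init (S N1) i t) with (init i + RInt fn 0 t).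
    replace (init i + RInt fn 0 t - (init i + RInt Gs 0 t)) with (RInt fn 0 t - RInt Gs 0 t) by ring.
    assert (E : RInt fn 0 t - RInt Gs 0 t = RInt (fun s => fn s - Gs s) 0 t).
    { rewrite (RInt_minus fn Gs). reflexivity. apply cont_ex_RInt; auto. apply cont_ex_RInt; auto. }
    rewrite E. replace (t * (L*(2*e'))) with ((t - 0) * (L*(2*e'))) by ring. apply abs_RInt_le_const; auto.
    apply cont_ex_RInt. intros u. apply (continuous_minus fn Gs); auto.
    intros u Hu. unfold fn, Gs. eapply Rle_trans. apply HGL.
    apply Rmult_le_compat_l. lra.
    pose proof (HA N1 (le_n _)).
    apply nrm3_lub; rewrite Rabs_minus_sym; (eapply Rle_trans; [apply sol_tail with (L := L) (M := M) (T := t) (N := N); auto; try lia; lra|lra]). }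
  replace (sol G init i t - (init i + RInt Gs 0 t)) with
    ((sol G init i t - pic G init (S N1) i t) + (pic G init (S N1) i t - (init i + RInt Gs 0 t))) by ring.
  eapply Rle_trans. apply Rabs_triang.
  apply Rle_trans with (e' * (2 + 2 * t * L)). nra.
  unfold e'. apply Rle_trans with (eps / (2 + 2 * t * L + 1) * (2 + 2 * t * L + 1)).
  apply Rmult_le_compat_l. left; apply He'. lra. right; field. nra.
Qed.

Lemma sol_deriv G init L M : GLip G L M -> forall i t, 0 < t ->
  is_derive (sol G init i) t (G i (sol G init 0 t) (sol G init 1 t) (sol G init 2 t)).
Proof.
  intros HG i t Ht. pose proof HG as [HL [HM [HGL HGM]]].
  set (Gs := fun s => G i (sol G init 0 s) (sol G init 1 s) (sol G init 2 s)).
  assert (CGs : forall u, continuous Gs u) by (apply Gcont with L M; auto; apply sol_cont with L M; auto).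
  change (is_derive (sol G init i) t (Gs t)).
  assert (D : is_derive (fun s => init i + RInt Gs 0 s) t (Gs t)).
  { assert (C : is_derive (fun _ : R => init i) t 0) by (apply (@is_derive_const R_AbsRing R_NormedModule)).
    pose proof (is_derive_plus _ _ _ _ _ C (RInt_deriv Gs t CGs)) as P.
    simpl in P. unfold plus in P; simpl in P. rewrite Rplus_0_l in P. exact P. }
  apply is_derive_ext_loc with (2 := D).
  exists (mkposreal t Ht). intros s Hs. change (Rabs (s - t) < t) in Hs.
  symmetry. apply sol_int with L M; auto.
  unfold Rabs in Hs; destruct Rcase_abs in Hs; lra.
Qed.

Theorem picard G init L M : GLip G L M ->
  exists f : nat -> R -> R, (forall i, f i 0 = init i) /\ (forall i t, continuous (f i) t) /\
   (forall i t, 0 < t -> is_derive (f i) t (G i (f 0%nat t) (f 1%nat t) (f 2%nat t))).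
Proof.
  intros HG. exists (sol G init). split; [|split].
  apply sol_0. apply sol_cont with L M; auto. apply sol_deriv with L M; auto.
Qed.

Definition inbox (r a b c : R) := Rabs a <= r /\ Rabs b <= r /\ Rabs c <= r.

Definition LB (f : R -> R -> R -> R) := exists L M, 0 <= L /\ 0 <= M /\
  forall a b c a' b' c', inbox (1/4) a b c -> inbox (1/4) a' b' c' ->
    Rabs (f a b c) <= M /\ Rabs (f a b c - f a' b' c') <= L * nrm3 (a-a') (b-b') (c-c').

Lemma LB_const k : LB (fun _ _ _ => k).
Proof.
  exists 0, (Rabs k). split; [lra|split; [apply Rabs_pos|]]. intros. split. lra.
  rewrite Rminus_diag, Rabs_R0. lra.
Qed.

Lemma LB_p1 : LB (fun a _ _ => a).
Proof.
  exists 1, (1/4). split; [lra|split; [lra|]]. intros a b c a' b' c' [H _] _. split; auto.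
  rewrite Rmult_1_l. apply nrm3_ge1.
Qed.
Lemma LB_p2 : LB (fun _ b _ => b).
Proof.
  exists 1, (1/4). split; [lra|split; [lra|]]. intros a b c a' b' c' [_ [H _]] _. split; auto.
  rewrite Rmult_1_l. apply nrm3_ge2.
Qed.
Lemma LB_p3 : LB (fun _ _ c => c).
Proof.
  exists 1, (1/4). split; [lra|split; [lra|]]. intros a b c a' b' c' [_ [_ H]] _. split; auto.
  rewrite Rmult_1_l. apply nrm3_ge3.
Qed.

Lemma LB_plus f g : LB f -> LB g -> LB (fun a b c => f a b c + g a b c).
Proof.
  intros [L1 [M1 [HL1 [HM1 H1]]]] [L2 [M2 [HL2 [HM2 H2]]]].
  exists (L1 + L2), (M1 + M2). split; [lra|split; [lra|]].
  intros a b c a' b' c' Ha Hb. destruct (H1 _ _ _ _ _ _ Ha Hb) as [A1 B1].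
  destruct (H2 _ _ _ _ _ _ Ha Hb) as [A2 B2]. split.
  eapply Rle_trans. apply Rabs_triang. lra.
  replace (f a b c + g a b c - (f a' b' c' + g a' b' c')) with
    ((f a b c - f a' b' c') + (g a b c - g a' b' c')) by ring.
  eapply Rle_trans. apply Rabs_triang. lra.
Qed.

Lemma LB_minus f g : LB f -> LB g -> LB (fun a b c => f a b c - g a b c).
Proof.
  intros [L1 [M1 [HL1 [HM1 H1]]]] [L2 [M2 [HL2 [HM2 H2]]]].
  exists (L1 + L2), (M1 + M2). split; [lra|split; [lra|]].
  intros a b c a' b' c' Ha Hb. destruct (H1 _ _ _ _ _ _ Ha Hb) as [A1 B1].
  destruct (H2 _ _ _ _ _ _ Ha Hb) as [A2 B2]. split.
  unfold Rminus at 1. eapply Rle_trans. apply Rabs_triang. rewrite Rabs_Ropp. lra.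
  replace (f a b c - g a b c - (f a' b' c' - g a' b' c')) with
    ((f a b c - f a' b' c') + - (g a b c - g a' b' c')) by ring.
  eapply Rle_trans. apply Rabs_triang. rewrite Rabs_Ropp. lra.
Qed.

Lemma LB_mult f g : LB f -> LB g -> LB (fun a b c => f a b c * g a b c).
Proof.
  intros [L1 [M1 [HL1 [HM1 H1]]]] [L2 [M2 [HL2 [HM2 H2]]]].
  exists (M1 * L2 + L1 * M2), (M1 * M2). split; [|split].
  apply Rplus_le_le_0_compat; apply Rmult_le_pos; auto. apply Rmult_le_pos; auto.
  intros a b c a' b' c' Ha Hb. destruct (H1 _ _ _ _ _ _ Ha Hb) as [A1 B1].
  destruct (H2 _ _ _ _ _ _ Ha Hb) as [A2 B2].
  destruct (H1 _ _ _ _ _ _ Hb Ha) as [A1' _].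
  destruct (H2 _ _ _ _ _ _ Hb Ha) as [A2' _]. split.
  rewrite Rabs_mult. apply Rmult_le_compat; auto; apply Rabs_pos.
  replace (f a b c * g a b c - f a' b' c' * g a' b' c') with
    (f a b c * (g a b c - g a' b' c') + (f a b c - f a' b' c') * g a' b' c') by ring.
  eapply Rle_trans. apply Rabs_triang. rewrite !Rabs_mult.
  pose proof (nrm3_ge0 (a-a') (b-b') (c-c')).
  pose proof (Rabs_pos (f a b c)). pose proof (Rabs_pos (g a' b' c')).
  pose proof (Rabs_pos (g a b c - g a' b' c')). pose proof (Rabs_pos (f a b c - f a' b' c')).
  apply Rle_trans with (M1 * (L2 * nrm3 (a - a') (b - b') (c - c')) + (L1 * nrm3 (a - a') (b - b') (c - c')) * M2).
  apply Rplus_le_compat; apply Rmult_le_compat; auto.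
  right; ring.
Qed.

Lemma LB_inv f m : 0 < m -> (forall a b c, inbox (1/4) a b c -> m <= f a b c) -> LB f ->
  LB (fun a b c => / f a b c).
Proof.
  intros Hm Hf [L1 [M1 [HL1 [HM1 H1]]]].
  exists (L1 / (m * m)), (/ m). split; [|split].
  apply Rmult_le_pos; auto. left; apply Rinv_0_lt_compat; nra.
  left; apply Rinv_0_lt_compat; lra.
  intros a b c a' b' c' Ha Hb. destruct (H1 _ _ _ _ _ _ Ha Hb) as [A1 B1].
  pose proof (Hf _ _ _ Ha). pose proof (Hf _ _ _ Hb). split.
  rewrite Rabs_pos_eq by (left; apply Rinv_0_lt_compat; lra).
  apply Rinv_le_contravar; lra.
  replace (/ f a b c - / f a' b' c') with ((f a' b' c' - f a b c) / (f a b c * f a' b' c')) by (field; lra).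
  unfold Rdiv. rewrite Rabs_mult, Rabs_minus_sym.
  rewrite (Rabs_pos_eq (/ _)) by (left; apply Rinv_0_lt_compat; nra).
  assert (/ (f a b c * f a' b' c') <= / (m * m)).
  { apply Rinv_le_contravar. nra. apply Rmult_le_compat; lra. }
  pose proof (nrm3_ge0 (a-a') (b-b') (c-c')).
  pose proof (Rabs_pos (f a b c - f a' b' c')).
  apply Rle_trans with ((L1 * nrm3 (a - a') (b - b') (c - c')) * / (m * m)).
  apply Rmult_le_compat; auto. left; apply Rinv_0_lt_compat; nra.
  right; field; lra.
Qed.

Lemma LB_pow f n : LB f -> LB (fun a b c => f a b c ^ n).
Proof.
  intros H. induction n; simpl. apply LB_const. apply LB_mult; auto.
Qed.

Lemma LB_ext f g : LB f -> (forall a b c, f a b c = g a b c) -> LB g.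
Proof.
  intros [L [M [HL [HM H]]]] E. exists L, M. split; [auto|split; [auto|]]. intros.
  rewrite <- !E; apply H; auto.
Qed.

Lemma LB_opp f : LB f -> LB (fun a b c => - f a b c).
Proof.
  intros H. apply LB_ext with (fun a b c => 0 - f a b c). apply LB_minus; auto. apply LB_const.
  intros; ring.
Qed.

Ltac lb := repeat first [ apply LB_p1 | apply LB_p2 | apply LB_p3 | apply LB_minus | apply LB_plus | apply LB_opp
   | apply LB_mult | apply LB_pow | apply LB_const ].

Definition fw (c1 w x z : R) := c1 * x - w.
Definition fx (d A1 B1 w x z : R) := z - (d + 1) * x + A1 * ((1 - w) * x * (1 - 3 * x - z) / (1 - x - z) ^ 2)
  + B1 * (x * (1 - 3 * x - z) / (1 - x - z)).
Definition fz (d A1 B1 w x z : R) := - 2 * z + 2 * d * x + 2 * A1 * ((1 - w) * x ^ 2 / (1 - x - z) ^ 2)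
  + 2 * B1 * (x ^ 2 / (1 - x - z)).

Lemma box_D a b c : inbox (1/4) a b c -> 1/2 <= 1 - b - c.
Proof. intros [_ [H1 H2]]. unfold Rabs in *; repeat destruct Rcase_abs in *; lra. Qed.

Lemma LB_fw c1 : LB (fw c1).
Proof. unfold fw. lb. Qed.

Lemma LB_fx d A1 B1 : LB (fx d A1 B1).
Proof.
  unfold fx, Rdiv. lb.
  apply LB_inv with (1/4). lra. intros a b c H. pose proof (box_D _ _ _ H). simpl. nra. lb.
  apply LB_inv with (1/2). lra. intros a b c H. pose proof (box_D _ _ _ H). lra. lb.
Qed.

Lemma LB_fz d A1 B1 : LB (fz d A1 B1).
Proof.
  unfold fz, Rdiv. lb.
  apply LB_inv with (1/4). lra. intros a b c H. pose proof (box_D _ _ _ H). simpl. nra. lb.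
  apply LB_inv with (1/2). lra. intros a b c H. pose proof (box_D _ _ _ H). lra. lb.
Qed.

Definition cl (a : R) := Rmax (-(1/4)) (Rmin (1/4) a).

Lemma cl_box a : Rabs (cl a) <= 1/4.
Proof. unfold cl, Rmax, Rmin. repeat destruct Rle_dec; unfold Rabs; destruct Rcase_abs; lra. Qed.

Lemma cl_lip a b : Rabs (cl a - cl b) <= Rabs (a - b).
Proof. unfold cl, Rmax, Rmin. repeat destruct Rle_dec; unfold Rabs; repeat destruct Rcase_abs; lra. Qed.

Lemma cl_id a : Rabs a <= 1/4 -> cl a = a.
Proof. intros H. unfold cl, Rmax, Rmin in *. unfold Rabs in H. destruct Rcase_abs in H;
  repeat destruct Rle_dec; lra. Qed.

Lemma LB_clamp f : LB f -> exists L M, 0 <= L /\ 0 <= M /\ forall a b c a' b' c',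
  Rabs (f (cl a) (cl b) (cl c)) <= M /\
  Rabs (f (cl a) (cl b) (cl c) - f (cl a') (cl b') (cl c')) <= L * nrm3 (a-a') (b-b') (c-c').
Proof.
  intros [L [M [HL [HM H]]]]. exists L, M. split; [auto|split; [auto|]]. intros.
  assert (B1 : inbox (1/4) (cl a) (cl b) (cl c)) by (repeat split; apply cl_box).
  assert (B2 : inbox (1/4) (cl a') (cl b') (cl c')) by (repeat split; apply cl_box).
  destruct (H _ _ _ _ _ _ B1 B2) as [X Y]. split; auto.
  eapply Rle_trans. apply Y. apply Rmult_le_compat_l; auto.
  apply nrm3_lub.
  eapply Rle_trans. apply cl_lip. apply nrm3_ge1.
  eapply Rle_trans. apply cl_lip. apply nrm3_ge2.
  eapply Rle_trans. apply cl_lip. apply nrm3_ge3.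
Qed.

Definition Gsys c1 d A1 B1 (i : nat) (a b c : R) : R :=
  match i with
  | O => fw c1 (cl a) (cl b) (cl c)
  | S O => fx d A1 B1 (cl a) (cl b) (cl c)
  | _ => fz d A1 B1 (cl a) (cl b) (cl c)
  end.

Lemma Gsys_lip c1 d A1 B1 : exists L M, GLip (Gsys c1 d A1 B1) L M.
Proof.
  destruct (LB_clamp _ (LB_fw c1)) as [L1 [M1 [HL1 [HM1 H1]]]].
  destruct (LB_clamp _ (LB_fx d A1 B1)) as [L2 [M2 [HL2 [HM2 H2]]]].
  destruct (LB_clamp _ (LB_fz d A1 B1)) as [L3 [M3 [HL3 [HM3 H3]]]].
  exists (L1 + L2 + L3 + 1), (M1 + M2 + M3). split; [lra|split; [lra|split]].
  - intros i a b c a' b' c'. pose proof (nrm3_ge0 (a-a') (b-b') (c-c')).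
    destruct i as [|[|i]]; simpl.
    + destruct (H1 a b c a' b' c') as [_ X]. eapply Rle_trans. apply X. nra.
    + destruct (H2 a b c a' b' c') as [_ X]. eapply Rle_trans. apply X. nra.
    + destruct (H3 a b c a' b' c') as [_ X]. eapply Rle_trans. apply X. nra.
  - intros i a b c. destruct i as [|[|i]]; simpl.
    + destruct (H1 a b c a b c) as [X _]. lra.
    + destruct (H2 a b c a b c) as [X _]. lra.
    + destruct (H3 a b c a b c) as [X _]. lra.
Qed.

Lemma rc_eps (f : R -> R) : filterlim f (at_right 0) (locally (f 0)) ->
  forall eps, 0 < eps -> exists del, 0 < del /\ forall v, 0 < v < del -> Rabs (f v - f 0) < eps.
Proof.
  intros H eps He. destruct (proj1 (filterlim_locally _ _) H (mkposreal eps He)) as [del Hd].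
  exists del. split. apply cond_pos. intros v Hv. apply Hd. change (Rabs (v - 0) < del).
  rewrite Rminus_0_r, Rabs_pos_eq; lra. lra.
Qed.

Lemma c_eps (f : R -> R) (x : R) : continuous f x ->
  forall eps, 0 < eps -> exists del, 0 < del /\ forall v, Rabs (v - x) < del -> Rabs (f v - f x) < eps.
Proof.
  intros H eps He. destruct (proj1 (filterlim_locally _ _) H (mkposreal eps He)) as [del Hd].
  exists del. split. apply cond_pos. intros v Hv. apply Hd. exact Hv.
Qed.

Lemma Rbar_lt_le (u t : R) (T : Rbar) : u <= t -> Rbar_lt t T -> Rbar_lt u T.
Proof. intros. destruct T; simpl in *; auto; lra. Qed.

Lemma deriv_cont (f : R -> R) t l : is_derive f t l -> continuous f t.
Proof. intros H. apply (@ex_derive_continuous R_AbsRing R_NormedModule). exists l; auto. Qed.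

Lemma dec_between (f df : R -> R) (T : Rbar) v t :
  (forall s, 0 < s -> Rbar_lt s T -> is_derive f s (df s) /\ df s <= 0) ->
  0 < v <= t -> Rbar_lt t T -> f t <= f v.
Proof.
  intros H Hv Ht. destruct (Req_dec v t). subst; lra.
  destruct (MVT_gen f v t df) as [c [Hc E]].
  - intros x Hx. rewrite Rmin_left in Hx by lra. rewrite Rmax_right in Hx by lra.
    apply H. lra. apply Rbar_lt_le with t; auto; lra.
  - intros x Hx. rewrite Rmin_left in Hx by lra. rewrite Rmax_right in Hx by lra.
    apply continuity_pt_filterlim. apply deriv_cont with (df x). apply H. lra.
    apply Rbar_lt_le with t; auto; lra.
  - rewrite Rmin_left in Hc by lra. rewrite Rmax_right in Hc by lra.
    destruct (H c ltac:(lra) (Rbar_lt_le c t T ltac:(lra) Ht)) as [_ Hd].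
    assert (df c * (t - v) <= 0). { apply Rmult_le_0_r; lra. } lra.
Qed.

Lemma mono_dec (f df : R -> R) (T : Rbar) :
  filterlim f (at_right 0) (locally (f 0)) ->
  (forall s, 0 < s -> Rbar_lt s T -> is_derive f s (df s) /\ df s <= 0) ->
  forall t, 0 <= t -> Rbar_lt t T -> f t <= f 0.
Proof.
  intros Hr H t Ht HT. destruct (Req_dec t 0). subst; lra.
  apply Rnot_lt_le. intros Hlt.
  destruct (rc_eps f Hr (f t - f 0) ltac:(lra)) as [del [Hd Hv]].
  set (v := Rmin del t / 2).
  assert (0 < v < del /\ v <= t).
  { unfold v. pose proof (Rmin_l del t). pose proof (Rmin_r del t).
    assert (0 < Rmin del t) by (apply Rmin_glb_lt; lra). lra. }
  pose proof (Hv v ltac:(lra)).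
  pose proof (dec_between f df T v t H ltac:(lra) HT).
  unfold Rabs in *; destruct Rcase_abs in *; lra.
Qed.

Lemma barrier (V dV : R -> R) (T : Rbar) rho :
  filterlim V (at_right 0) (locally (V 0)) -> V 0 < rho ->
  (forall t, 0 < t -> Rbar_lt t T -> is_derive V t (dV t)) ->
  (forall t, 0 < t -> Rbar_lt t T -> V t < rho -> dV t <= 0) ->
  forall t, 0 <= t -> Rbar_lt t T -> V t <= V 0.
Proof.
  intros Hr H0 HD Hneg t Ht HT.
  destruct (Req_dec t 0) as [->|Htn]. lra.
  set (S := fun s => 0 <= s <= t /\ forall u, 0 <= u <= s -> V u < rho).
  assert (S0 : S 0) by (split; [lra| intros u Hu; replace u with 0 by lra; auto]).
  assert (Sb : bound S) by (exists t; intros s [Hs _]; lra).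
  assert (Sne : exists x, S x) by (exists 0; auto).
  destruct (completeness S Sb Sne) as [sig [Hub Hlub]].
  assert (Hs0 : 0 <= sig) by (apply Hub; auto).
  assert (Hst : sig <= t) by (apply Hlub; intros s [Hs _]; lra).
  assert (A : forall u, 0 <= u < sig -> V u < rho).
  { intros u Hu. destruct (classic (exists s, S s /\ u < s)) as [[s [[_ Hs] Hus]]|Hn].
    apply Hs; lra.
    assert (Hu' : is_upper_bound S u).
    { intros s Hs. apply Rnot_lt_le. intros Hlt. apply Hn. eauto. }
    specialize (Hlub u Hu'). lra. }
  assert (B : forall u, 0 <= u < sig -> V u <= V 0).
  { intros u Hu. apply (mono_dec V dV (Finite sig)); [auto| |lra|simpl; lra].
    intros s Hs Hss. simpl in Hss. split. apply HD; auto. apply Rbar_lt_le with t; auto; lra.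
    apply Hneg; auto. apply Rbar_lt_le with t; auto; lra. apply A; lra. }
  assert (C : V sig <= V 0).
  { destruct (Req_dec sig 0) as [Hz|Hsn]. rewrite Hz; lra.
    assert (Cs : continuous V sig) by (apply deriv_cont with (dV sig); apply HD; [lra|apply Rbar_lt_le with t; auto]).
    apply Rnot_lt_le. intros Hlt.
    destruct (c_eps V sig Cs (V sig - V 0) ltac:(lra)) as [del [Hd Hv]].
    set (u := Rmax (sig - del/2) (sig/2)).
    assert (Hu1 : sig/2 <= u /\ sig - del/2 <= u) by (split; [apply Rmax_r|apply Rmax_l]).
    assert (Hu2 : u < sig) by (unfold u; apply Rmax_lub_lt; lra).
    assert (Hu3 : Rabs (u - sig) < del) by (rewrite Rabs_left by lra; lra).
    pose proof (Hv u Hu3) as Hw. pose proof (B u ltac:(lra)).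
    unfold Rabs in Hw; destruct Rcase_abs in Hw; lra. }
  assert (Hsig : sig = t).
  { destruct (Req_dec sig t) as [E|E]; auto. exfalso.
    assert (exists del, 0 < del /\ forall u, sig < u < sig + del -> V u < rho) as [del [Hd Hv]].
    { destruct (Req_dec sig 0) as [Hz|Hsn].
      - destruct (rc_eps V Hr (rho - V 0) ltac:(lra)) as [del [Hd Hv]].
        exists del. split; auto. intros u Hu. rewrite Hz in Hu. pose proof (Hv u ltac:(lra)) as Hw.
        unfold Rabs in Hw; destruct Rcase_abs in Hw; lra.
      - assert (Cs : continuous V sig) by (apply deriv_cont with (dV sig); apply HD; [lra|apply Rbar_lt_le with t; auto]).
        destruct (c_eps V sig Cs (rho - V sig) ltac:(lra)) as [del [Hd Hv]].
        exists del. split; auto. intros u Hu. assert (Hw1 : Rabs (u - sig) < del) by (rewrite Rabs_pos_eq; lra).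
        pose proof (Hv u Hw1) as Hw. unfold Rabs in Hw; destruct Rcase_abs in Hw; lra. }
    set (s' := Rmin (sig + del/2) t).
    assert (Hs1 : s' <= sig + del/2 /\ s' <= t) by (split; [apply Rmin_l|apply Rmin_r]).
    assert (Hs2 : sig < s') by (unfold s'; apply Rmin_glb_lt; lra).
    assert (Hs3 : S s').
    { split. lra. intros u Hu. destruct (Rlt_le_dec u sig). apply A; lra.
      destruct (Req_dec u sig) as [Eu|Eu]. rewrite Eu. lra. apply Hv. lra. }
    specialize (Hub s' Hs3). lra. }
  rewrite <- Hsig. exact C.
Qed.

Definition E1 (w x z : R) := - x + z - w + 3 * w * x + w * z - x ^ 2 - 2 * x * z - z ^ 2.
Definition hh A1 B1 w x z := A1 * E1 w x z / (1 - x - z) ^ 2 - 2 * B1 * x / (1 - x - z).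
Definition gg A1 B1 w x z := 2 * A1 * (1 - w) / (1 - x - z) ^ 2 + 2 * B1 / (1 - x - z).

Lemma fx_dec d A1 B1 w x z : 1 - x - z <> 0 ->
  fx d A1 B1 w x z = z + (-(d+1) + A1 + B1) * x + x * hh A1 B1 w x z.
Proof. intros H. unfold fx, hh, E1. field. auto. Qed.

Lemma fz_dec d A1 B1 w x z : 1 - x - z <> 0 ->
  fz d A1 B1 w x z = 2 * d * x - 2 * z + x ^ 2 * gg A1 B1 w x z.
Proof. intros H. unfold fz, gg. field. auto. Qed.

Definition Kh A1 B1 := 20 * Rabs A1 + 4 * Rabs B1.
Definition Kg A1 B1 := 10 * Rabs A1 + 4 * Rabs B1.

Lemma abs_le r v : Rabs v <= r -> - r <= v <= r.
Proof. unfold Rabs; destruct Rcase_abs; lra. Qed.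

Lemma E1_bound r w x z : r <= 1/4 -> inbox r w x z -> Rabs (E1 w x z) <= 5 * r.
Proof.
  intros Hr [Hw [Hx Hz]]. apply abs_le in Hw, Hx, Hz.
  unfold E1. apply Rabs_le. split; nra.
Qed.

Lemma hh_bound r A1 B1 w x z : r <= 1/4 -> inbox r w x z -> Rabs (hh A1 B1 w x z) <= Kh A1 B1 * r.
Proof.
  intros Hr Hb. pose proof (E1_bound r w x z Hr Hb) as HE.
  destruct Hb as [Hw [Hx Hz]]. pose proof (abs_le _ _ Hx). pose proof (abs_le _ _ Hz).
  assert (HD : 1/2 <= 1 - x - z) by lra.
  unfold hh, Kh, Rdiv. unfold Rminus at 1.
  eapply Rle_trans. apply Rabs_triang. rewrite Rabs_Ropp, !Rabs_mult.
  rewrite (Rabs_pos_eq (/ _)) by (left; apply Rinv_0_lt_compat; nra).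
  rewrite (Rabs_pos_eq (/ (1 - x - z))) by (left; apply Rinv_0_lt_compat; lra).
  rewrite (Rabs_pos_eq 2) by lra.
  assert (I1 : / (1 - x - z) ^ 2 <= 4).
  { replace 4 with (/ (/4)) by field. apply Rinv_le_contravar. lra. nra. }
  assert (I2 : / (1 - x - z) <= 2).
  { replace 2 with (/ (/2)) by field. apply Rinv_le_contravar. lra. lra. }
  assert (0 <= / (1 - x - z) ^ 2) by (left; apply Rinv_0_lt_compat; nra).
  assert (0 <= / (1 - x - z)) by (left; apply Rinv_0_lt_compat; lra).
  pose proof (Rabs_pos A1). pose proof (Rabs_pos B1). pose proof (Rabs_pos (E1 w x z)).
  pose proof (Rabs_pos x).
  assert (Rabs A1 * Rabs (E1 w x z) * / (1 - x - z) ^ 2 <= Rabs A1 * (5 * r) * 4).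
  { apply Rmult_le_compat; auto. apply Rmult_le_pos; auto. apply Rmult_le_compat_l; auto. }
  assert (2 * Rabs B1 * Rabs x * / (1 - x - z) <= 2 * Rabs B1 * r * 2).
  { apply Rmult_le_compat; auto. apply Rmult_le_pos; auto. lra. apply Rmult_le_compat_l; lra. }
  lra.
Qed.

Lemma gg_bound r A1 B1 w x z : r <= 1/4 -> inbox r w x z -> Rabs (gg A1 B1 w x z) <= Kg A1 B1.
Proof.
  intros Hr Hb.
  destruct Hb as [Hw [Hx Hz]]. pose proof (abs_le _ _ Hx). pose proof (abs_le _ _ Hz).
  pose proof (abs_le _ _ Hw).
  assert (HD : 1/2 <= 1 - x - z) by lra.
  unfold gg, Kg, Rdiv.
  eapply Rle_trans. apply Rabs_triang. rewrite !Rabs_mult.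
  rewrite (Rabs_pos_eq (/ _)) by (left; apply Rinv_0_lt_compat; nra).
  rewrite (Rabs_pos_eq (/ (1 - x - z))) by (left; apply Rinv_0_lt_compat; lra).
  rewrite (Rabs_pos_eq 2) by lra.
  assert (I1 : / (1 - x - z) ^ 2 <= 4).
  { replace 4 with (/ (/4)) by field. apply Rinv_le_contravar. lra. nra. }
  assert (I2 : / (1 - x - z) <= 2).
  { replace 2 with (/ (/2)) by field. apply Rinv_le_contravar. lra. lra. }
  assert (0 <= / (1 - x - z) ^ 2) by (left; apply Rinv_0_lt_compat; nra).
  assert (0 <= / (1 - x - z)) by (left; apply Rinv_0_lt_compat; lra).
  pose proof (Rabs_pos A1). pose proof (Rabs_pos B1).
  assert (Rabs (1 - w) <= 5/4) by (apply Rabs_le; lra).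
  pose proof (Rabs_pos (1 - w)).
  assert (2 * Rabs A1 * Rabs (1 - w) * / (1 - x - z) ^ 2 <= 2 * Rabs A1 * (5/4) * 4).
  { apply Rmult_le_compat; auto. apply Rmult_le_pos; auto. apply Rmult_le_pos; lra.
    apply Rmult_le_compat_l; auto. apply Rmult_le_pos; lra. }
  assert (2 * Rabs B1 * / (1 - x - z) <= 2 * Rabs B1 * 2).
  { apply Rmult_le_compat_l; auto. apply Rmult_le_pos; lra. }
  lra.
Qed.

Definition Vs eps d w x z := eps * w ^ 2 + 2 * d * x ^ 2 + z ^ 2.
Definition dVs eps d c1 A1 B1 w x z :=
  2 * eps * w * fw c1 w x z + 4 * d * x * fx d A1 B1 w x z + 2 * z * fz d A1 B1 w x z.
Definition epsS d c1 A1 B1 := d * (1 - A1 - B1) / (c1 ^ 2 + 1).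
Definition cS d A1 B1 := Rmin 1 ((1 - A1 - B1) / (1 + d)).

Lemma lyap_stab d c1 A1 B1 r w x z :
  0 < d -> 0 < 1 - A1 - B1 -> r <= 1/8 ->
  r * (4 * d * Kh A1 B1 + 2 * Kg A1 B1) <= d * (1 - A1 - B1) -> inbox r w x z ->
  dVs (epsS d c1 A1 B1) d c1 A1 B1 w x z <= - cS d A1 B1 * Vs (epsS d c1 A1 B1) d w x z.
Proof.
  intros Hd He Hr Hrr Hb.
  set (e := 1 - A1 - B1) in *.
  set (eps := epsS d c1 A1 B1).
  assert (Heps : 0 <= eps) by (unfold eps, epsS; apply Rdiv_le_0_compat; [fold e; nra|nra]).
  assert (Hepsc : eps * c1 ^ 2 <= d * e).
  { unfold eps, epsS. fold e. apply Rle_trans with (d * e * (c1^2 / (c1^2+1))).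
    right; field; nra. rewrite <- (Rmult_1_r (d * e)) at 2. apply Rmult_le_compat_l. nra.
    apply Rmult_le_reg_r with (c1^2+1). nra. unfold Rdiv. rewrite Rmult_assoc, Rinv_l by nra. nra. }
  pose proof (hh_bound r A1 B1 w x z ltac:(lra) Hb) as Hh.
  pose proof (gg_bound r A1 B1 w x z ltac:(lra) Hb) as Hg.
  destruct Hb as [Hw [Hx Hz]].
  pose proof (abs_le _ _ Hx). pose proof (abs_le _ _ Hz).
  assert (HD : 1 - x - z <> 0) by lra.
  unfold dVs. rewrite fx_dec, fz_dec by auto.
  set (h := hh A1 B1 w x z) in *. set (g := gg A1 B1 w x z) in *.
  assert (HN : Rabs (4 * d * h + 2 * z * g) <= d * e).
  { eapply Rle_trans. apply Rabs_triang. rewrite !Rabs_mult. rewrite (Rabs_pos_eq 4), (Rabs_pos_eq 2), (Rabs_pos_eq d) by lra.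
    pose proof (Rabs_pos z). pose proof (Rabs_pos g). pose proof (Rabs_pos h).
    assert (Rabs z * Rabs g <= r * Kg A1 B1) by (apply Rmult_le_compat; auto).
    nra. }
  apply abs_le in HN.
  assert (X2 : x ^ 2 * (4 * d * h + 2 * z * g) <= d * e * x ^ 2).
  { assert (0 <= x^2) by nra. nra. }
  assert (X3 : 2 * eps * c1 * w * x <= eps * w ^ 2 + eps * c1 ^ 2 * x ^ 2).
  { assert (0 <= eps * (w - c1 * x) ^ 2) by (apply Rmult_le_pos; [exact Heps| apply pow2_ge_0]). nra. }
  assert (X4 : eps * c1 ^ 2 * x ^ 2 <= d * e * x ^ 2) by (apply Rmult_le_compat_r; nra).
  assert (Hc1 : cS d A1 B1 <= 1) by apply Rmin_l.
  assert (Hc2 : cS d A1 B1 * (1 + d) <= e).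
  { apply Rle_trans with ((e / (1 + d)) * (1 + d)). apply Rmult_le_compat_r. lra. apply Rmin_r.
    right; field; lra. }
  assert (Hc0 : 0 <= cS d A1 B1).
  { unfold cS; fold e. apply Rmin_glb. lra. apply Rdiv_le_0_compat; lra. }
  set (c := cS d A1 B1) in *.
  assert (Y1 : c * (eps * w ^ 2) <= eps * w ^ 2).
  { assert (0 <= eps * w^2) by (apply Rmult_le_pos; nra). nra. }
  assert (Y2 : c * z ^ 2 <= c * (2 * (d * x - z) ^ 2 + 2 * d ^ 2 * x ^ 2)).
  { apply Rmult_le_compat_l; auto. pose proof (pow2_ge_0 (2*d*x - z)). nra. }
  assert (Y3 : c * (2 * d * x ^ 2 + 2 * d ^ 2 * x ^ 2) <= 2 * d * e * x ^ 2).
  { replace (c * (2 * d * x ^ 2 + 2 * d ^ 2 * x ^ 2)) with ((c * (1 + d)) * (2 * d * x ^ 2)) by ring.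
    replace (2 * d * e * x ^ 2) with (e * (2 * d * x ^ 2)) by ring.
    apply Rmult_le_compat_r; auto. nra. }
  assert (Y4 : c * (2 * (d * x - z) ^ 2) <= 4 * (d * x - z) ^ 2).
  { assert (Q : 0 <= (d * x - z) ^ 2) by apply pow2_ge_0. assert (c * (d*x-z)^2 <= 1 * (d*x-z)^2) by (apply Rmult_le_compat_r; auto). lra. }
  unfold Vs, fw.
  replace (-(d + 1) + A1 + B1) with (- d - e) by (unfold e; ring).
  nra.
Qed.

Definition yv (l x z : R) := (l + 2) * x + z.

Lemma y_dyn d A1 B1 l w x z : 1 - x - z <> 0 ->
  l ^ 2 - ((-(d+1) + A1 + B1) - 2) * l - 2 * ((-(d+1) + A1 + B1) + d) = 0 ->
  (l + 2) * fx d A1 B1 w x z + fz d A1 B1 w x z =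
    l * yv l x z + x * ((l + 2) * hh A1 B1 w x z + x * gg A1 B1 w x z).
Proof.
  intros HD Hc. rewrite fx_dec, fz_dec by auto. unfold yv.
  apply Rminus_diag_uniq.
  set (a := -(d+1) + A1 + B1) in *.
  transitivity (- x * (l ^ 2 - (a - 2) * l - 2 * (a + d))). unfold a; ring.
  rewrite Hc. ring.
Qed.

Lemma Phi_bound r A1 B1 l w x z : r <= 1/4 -> inbox r w x z ->
  Rabs ((l + 2) * hh A1 B1 w x z + x * gg A1 B1 w x z) <= r * (Rabs (l+2) * Kh A1 B1 + Kg A1 B1).
Proof.
  intros Hr Hb. pose proof (hh_bound r A1 B1 w x z Hr Hb). pose proof (gg_bound r A1 B1 w x z Hr Hb).
  destruct Hb as [_ [Hx _]].
  eapply Rle_trans. apply Rabs_triang. rewrite !Rabs_mult.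
  pose proof (Rabs_pos (l+2)). pose proof (Rabs_pos x). pose proof (Rabs_pos (gg A1 B1 w x z)).
  assert (Rabs (l + 2) * Rabs (hh A1 B1 w x z) <= Rabs (l+2) * (Kh A1 B1 * r)) by (apply Rmult_le_compat_l; auto).
  assert (Rabs x * Rabs (gg A1 B1 w x z) <= r * Kg A1 B1) by (apply Rmult_le_compat; auto).
  nra.
Qed.

Lemma cross_bound (y x P B : R) : Rabs P <= B -> - (B * (y ^ 2 + x ^ 2)) <= 2 * y * (x * P).
Proof.
  intros H. apply abs_le in H.
  assert (0 <= (y - x)^2) by apply pow2_ge_0. assert (0 <= (y + x)^2) by apply pow2_ge_0.
  destruct (Rle_dec 0 (y * x)).
  - assert (y * x * P >= - (B * (y * x))) by nra. nra.
  - assert (y * x * P >= B * (y * x)) by nra. nra.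
Qed.

Definition Ucf lp lm (x z : R) := yv lp x z ^ 2 - yv lm x z ^ 2.
Definition dUcf d A1 B1 lp lm w x z :=
  2 * yv lp x z * ((lp + 2) * fx d A1 B1 w x z + fz d A1 B1 w x z)
  - 2 * yv lm x z * ((lm + 2) * fx d A1 B1 w x z + fz d A1 B1 w x z).

Lemma chetaev d A1 B1 lp lm s mu r w x z :
  0 < lp -> lm < 0 -> lp - lm = s -> 0 < s -> 0 < mu -> mu <= lp -> mu <= - lm ->
  lp ^ 2 - ((-(d+1) + A1 + B1) - 2) * lp - 2 * ((-(d+1) + A1 + B1) + d) = 0 ->
  lm ^ 2 - ((-(d+1) + A1 + B1) - 2) * lm - 2 * ((-(d+1) + A1 + B1) + d) = 0 ->
  0 <= r -> r <= 1/8 ->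
  r * ((Rabs (lp+2) * Kh A1 B1 + Kg A1 B1) + (Rabs (lm+2) * Kh A1 B1 + Kg A1 B1)) * (1 + 2 / s ^ 2) <= mu ->
  inbox r w x z ->
  mu * (yv lp x z ^ 2 + yv lm x z ^ 2) <= dUcf d A1 B1 lp lm w x z.
Proof.
  intros Hp Hm Hs Hs0 Hmu Hmu1 Hmu2 Cp Cm Hr0 Hr Hrr Hb.
  pose proof Hb as [_ [Hx Hz]]. apply abs_le in Hx, Hz.
  assert (HD : 1 - x - z <> 0) by lra.
  unfold dUcf. rewrite !y_dyn by auto.
  pose proof (Phi_bound r A1 B1 lp w x z ltac:(lra) Hb) as Pp.
  pose proof (Phi_bound r A1 B1 lm w x z ltac:(lra) Hb) as Pm.
  set (Pp' := (lp + 2) * hh A1 B1 w x z + x * gg A1 B1 w x z) in *.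
  set (Pm' := (lm + 2) * hh A1 B1 w x z + x * gg A1 B1 w x z) in *.
  set (Kp := Rabs (lp+2) * Kh A1 B1 + Kg A1 B1) in *.
  set (Km := Rabs (lm+2) * Kh A1 B1 + Kg A1 B1) in *.
  set (yp := yv lp x z). set (ym := yv lm x z).
  assert (Ex : s * x = yp - ym) by (unfold yp, ym, yv; rewrite <- Hs; ring).
  assert (Sx : x ^ 2 <= 2 / s ^ 2 * (yp ^ 2 + ym ^ 2)).
  { apply Rmult_le_reg_l with (s ^ 2). nra.
    replace (s ^ 2 * (2 / s ^ 2 * (yp ^ 2 + ym ^ 2))) with (2 * (yp ^ 2 + ym ^ 2)) by (field; lra).
    replace (s ^ 2 * x ^ 2) with ((s * x) ^ 2) by ring. rewrite Ex.
    pose proof (pow2_ge_0 (yp + ym)). nra. }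
  pose proof (cross_bound yp x Pp' (r * Kp) Pp) as C1.
  pose proof (cross_bound ym x Pm' (r * Km) Pm) as C2.
  assert (HKp : 0 <= Kp).
  { unfold Kp, Kh, Kg. pose proof (Rabs_pos (lp+2)). pose proof (Rabs_pos A1). pose proof (Rabs_pos B1). nra. }
  assert (HKm : 0 <= Km).
  { unfold Km, Kh, Kg. pose proof (Rabs_pos (lm+2)). pose proof (Rabs_pos A1). pose proof (Rabs_pos B1). nra. }
  set (S := yp ^ 2 + ym ^ 2) in *.
  assert (HS : 0 <= S) by (unfold S; pose proof (pow2_ge_0 yp); pose proof (pow2_ge_0 ym); lra).
  assert (Q1 : r * Kp * (yp ^ 2 + x ^ 2) + r * Km * (ym ^ 2 + x ^ 2) <= r * (Kp + Km) * (1 + 2 / s ^ 2) * S).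
  { assert (yp ^ 2 + x ^ 2 <= (1 + 2 / s ^ 2) * S) by (unfold S in *; pose proof (pow2_ge_0 ym); lra).
    assert (ym ^ 2 + x ^ 2 <= (1 + 2 / s ^ 2) * S) by (unfold S in *; pose proof (pow2_ge_0 yp); lra).
    assert (0 <= r * Kp) by nra. assert (0 <= r * Km) by nra.
    apply Rle_trans with (r * Kp * ((1 + 2 / s ^ 2) * S) + r * Km * ((1 + 2 / s ^ 2) * S)).
    apply Rplus_le_compat; apply Rmult_le_compat_l; auto. right; ring. }
  assert (Q2 : r * (Kp + Km) * (1 + 2 / s ^ 2) * S <= mu * S) by (apply Rmult_le_compat_r; auto).
  assert (L1 : mu * yp ^ 2 <= lp * yp ^ 2) by (apply Rmult_le_compat_r; auto; apply pow2_ge_0).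
  assert (L2 : mu * ym ^ 2 <= - lm * ym ^ 2) by (apply Rmult_le_compat_r; auto; apply pow2_ge_0).
  unfold S in *.
  replace (2 * yp * (lp * yp + x * Pp') - 2 * ym * (lm * ym + x * Pm')) with
    (2 * lp * yp ^ 2 - 2 * lm * ym ^ 2 + 2 * yp * (x * Pp') - 2 * ym * (x * Pm')) by ring.
  assert (C2' : 2 * ym * (x * Pm') <= r * Km * (ym ^ 2 + x ^ 2)).
  { pose proof (cross_bound ym x (- Pm') (r * Km) ltac:(rewrite Rabs_Ropp; auto)). lra. }
  lra.
Qed.

Definition RC (f : R -> R) := filterlim f (at_right 0) (locally (f 0)).

Lemma RC_plus f g : RC f -> RC g -> RC (fun t => f t + g t).
Proof.
  intros Hf Hg. unfold RC.
  apply (filterlim_comp_2 (G := locally (f 0)) (H := locally (g 0)) f g Rplus); auto.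
  apply (filterlim_plus (f 0) (g 0)).
Qed.

Lemma RC_mult f g : RC f -> RC g -> RC (fun t => f t * g t).
Proof.
  intros Hf Hg. unfold RC.
  apply (filterlim_comp_2 (G := locally (f 0)) (H := locally (g 0)) f g Rmult); auto.
  apply (filterlim_mult (f 0) (g 0)).
Qed.

Lemma RC_const k : RC (fun _ => k).
Proof. unfold RC. apply filterlim_const. Qed.

Lemma RC_id : RC (fun t => t).
Proof. unfold RC. apply (filterlim_filter_le_1 (F := locally 0)). apply filter_le_within. apply filterlim_id. Qed.

Lemma RC_cont f : (forall t, continuous f t) -> RC f.
Proof. intros H. unfold RC. apply (filterlim_filter_le_1 (F := locally 0)). apply filter_le_within. apply H. Qed.

Lemma RC_ext f g : (forall t, f t = g t) -> RC f -> RC g.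
Proof.
  intros E H. unfold RC in *. rewrite <- E. apply filterlim_ext with f; auto.
Qed.

Lemma RC_minus f g : RC f -> RC g -> RC (fun t => f t - g t).
Proof.
  intros Hf Hg. apply RC_ext with (fun t => f t + (-1) * g t). intros; ring.
  apply RC_plus; auto. apply RC_mult; auto. apply RC_const.
Qed.

Lemma RC_pow f n : RC f -> RC (fun t => f t ^ n).
Proof. intros H. induction n; simpl. apply RC_const. apply RC_mult; auto. Qed.

Lemma der_plus (f g : R -> R) (t a b : R) : is_derive f t a -> is_derive g t b -> is_derive (fun s => f s + g s) t (a + b).
Proof. intros H1 H2. exact (is_derive_plus f g t a b H1 H2). Qed.
Lemma der_minus (f g : R -> R) (t a b : R) : is_derive f t a -> is_derive g t b -> is_derive (fun s => f s - g s) t (a - b).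
Proof. intros H1 H2. exact (is_derive_minus f g t a b H1 H2). Qed.
Lemma der_mult (f g : R -> R) (t a b : R) : is_derive f t a -> is_derive g t b -> is_derive (fun s => f s * g s) t (a * g t + f t * b).
Proof. intros H1 H2. exact (is_derive_mult f g t a b H1 H2 Rmult_comm). Qed.
Lemma der_scal (k : R) (f : R -> R) (t a : R) : is_derive f t a -> is_derive (fun s => k * f s) t (k * a).
Proof. intros H. exact (is_derive_scal f t k a H). Qed.
Lemma der_sq (f : R -> R) (t a : R) : is_derive f t a -> is_derive (fun s => f s ^ 2) t (2 * f t * a).
Proof.
  intros H. pose proof (is_derive_pow f 2 t a H) as P. simpl in P.
  replace (2 * f t * a) with ((1 + 1) * a * (f t * 1)) by ring. exact P.
Qed.
Lemma der_eq (f : R -> R) (t a b : R) : is_derive f t a -> a = b -> is_derive f t b.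
Proof. intros H ->; auto. Qed.

Definition rS d A1 B1 := Rmin (1/8) (d * (1 - A1 - B1) / (4 * d * Kh A1 B1 + 2 * Kg A1 B1 + 1)).
Definition mS d c1 A1 B1 := Rmin (epsS d c1 A1 B1) (Rmin (2 * d) 1).

Lemma Kh_nn A1 B1 : 0 <= Kh A1 B1.
Proof. unfold Kh. pose proof (Rabs_pos A1). pose proof (Rabs_pos B1). lra. Qed.
Lemma Kg_nn A1 B1 : 0 <= Kg A1 B1.
Proof. unfold Kg. pose proof (Rabs_pos A1). pose proof (Rabs_pos B1). lra. Qed.

Lemma rS_props d A1 B1 : 0 < d -> 0 < 1 - A1 - B1 ->
  0 < rS d A1 B1 /\ rS d A1 B1 <= 1/8 /\ rS d A1 B1 * (4 * d * Kh A1 B1 + 2 * Kg A1 B1) <= d * (1 - A1 - B1).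
Proof.
  intros Hd He. pose proof (Kh_nn A1 B1). pose proof (Kg_nn A1 B1).
  set (K := 4 * d * Kh A1 B1 + 2 * Kg A1 B1).
  assert (HK : 0 <= K) by (unfold K; nra).
  assert (Hq : 0 < d * (1 - A1 - B1) / (K + 1)) by (apply Rdiv_lt_0_compat; nra).
  unfold rS. fold K. split; [|split].
  - apply Rmin_glb_lt; lra.
  - apply Rmin_l.
  - apply Rle_trans with (d * (1 - A1 - B1) / (K + 1) * K).
    apply Rmult_le_compat_r; auto. apply Rmin_r.
    apply Rle_trans with (d * (1 - A1 - B1) / (K + 1) * (K + 1)). apply Rmult_le_compat_l; lra.
    right; field; lra.
Qed.

Lemma epsS_pos d c1 A1 B1 : 0 < d -> 0 < 1 - A1 - B1 -> 0 < epsS d c1 A1 B1.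
Proof. intros. unfold epsS. apply Rdiv_lt_0_compat; nra. Qed.

Lemma mS_pos d c1 A1 B1 : 0 < d -> 0 < 1 - A1 - B1 -> 0 < mS d c1 A1 B1.
Proof.
  intros. unfold mS. pose proof (epsS_pos d c1 A1 B1 H H0).
  apply Rmin_glb_lt; auto. apply Rmin_glb_lt; lra.
Qed.

Lemma mS_le d c1 A1 B1 : mS d c1 A1 B1 <= epsS d c1 A1 B1 /\ mS d c1 A1 B1 <= 2 * d /\ mS d c1 A1 B1 <= 1.
Proof.
  unfold mS. split. apply Rmin_l. split.
  eapply Rle_trans. apply Rmin_r. apply Rmin_l.
  eapply Rle_trans. apply Rmin_r. apply Rmin_r.
Qed.

Lemma V_small d c1 A1 B1 rho w x z : 0 < d -> 0 < 1 - A1 - B1 -> 0 < rho ->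
  Vs (epsS d c1 A1 B1) d w x z < mS d c1 A1 B1 * rho ^ 2 -> nrm3 w x z < rho.
Proof.
  intros Hd He Hr HV. pose proof (mS_pos d c1 A1 B1 Hd He) as Hm.
  destruct (mS_le d c1 A1 B1) as [H1 [H2 H3]].
  pose proof (epsS_pos d c1 A1 B1 Hd He).
  set (m := mS d c1 A1 B1) in *. set (e := epsS d c1 A1 B1) in *.
  unfold Vs in HV.
  pose proof (pow2_ge_0 w). pose proof (pow2_ge_0 x). pose proof (pow2_ge_0 z).
  assert (Hw : m * w ^ 2 <= e * w ^ 2) by (apply Rmult_le_compat_r; auto).
  assert (Hx : m * x ^ 2 <= 2 * d * x ^ 2) by (apply Rmult_le_compat_r; auto).
  assert (Hz : m * z ^ 2 <= 1 * z ^ 2) by (apply Rmult_le_compat_r; auto).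
  assert (G : forall v, m * v ^ 2 < m * rho ^ 2 -> Rabs v < rho).
  { intros v Hv. apply Rnot_le_lt. intros Hc.
    assert (rho ^ 2 <= v ^ 2). { rewrite <- (pow2_abs v). apply pow_incr. lra. }
    nra. }
  assert (0 <= 2 * d * x ^ 2) by (apply Rmult_le_pos; lra).
  assert (0 <= e * w ^ 2) by (apply Rmult_le_pos; lra).
  apply nrm3_lt; apply G; lra.
Qed.

Lemma V_nonneg eps d w x z : 0 <= eps -> 0 <= d -> 0 <= Vs eps d w x z.
Proof.
  intros. unfold Vs. pose proof (pow2_ge_0 w). pose proof (pow2_ge_0 x). pose proof (pow2_ge_0 z).
  assert (0 <= eps * w^2) by (apply Rmult_le_pos; auto). nra.
Qed.

Lemma V_upper eps d w x z : 0 <= eps -> 0 <= d ->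
  Vs eps d w x z <= (eps + 2 * d + 1) * nrm3 w x z ^ 2.
Proof.
  intros He Hd. unfold Vs.
  assert (G : forall v, Rabs v <= nrm3 w x z -> v ^ 2 <= nrm3 w x z ^ 2).
  { intros v Hv. rewrite <- (pow2_abs v). apply pow_incr. split; auto. apply Rabs_pos. }
  pose proof (G w (nrm3_ge1 w x z)). pose proof (G x (nrm3_ge2 w x z)). pose proof (G z (nrm3_ge3 w x z)).
  assert (eps * w ^ 2 <= eps * nrm3 w x z ^ 2) by (apply Rmult_le_compat_l; auto).
  assert (2 * d * x ^ 2 <= 2 * d * nrm3 w x z ^ 2) by (apply Rmult_le_compat_l; lra).
  nra.
Qed.

Lemma RC_V eps d (W X Z : R -> R) : RC W -> RC X -> RC Z ->
  RC (fun t => Vs eps d (W t) (X t) (Z t)).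
Proof.
  intros. unfold Vs. apply RC_plus. apply RC_plus.
  apply RC_mult. apply RC_const. apply RC_pow; auto.
  apply RC_mult. apply RC_const. apply RC_pow; auto.
  apply RC_pow; auto.
Qed.

Lemma der_V eps d (W X Z : R -> R) t a b c : is_derive W t a -> is_derive X t b -> is_derive Z t c ->
  is_derive (fun s => Vs eps d (W s) (X s) (Z s)) t (2 * eps * W t * a + 4 * d * X t * b + 2 * Z t * c).
Proof.
  intros H1 H2 H3. unfold Vs.
  eapply der_eq. apply der_plus. apply der_plus.
  apply der_scal. apply der_sq; eauto.
  apply (der_scal (2 * d) (fun s => X s ^ 2)). apply der_sq; eauto.
  apply der_sq; eauto. ring.
Qed.

Definition Hyp_traj c1 d A1 B1 (W X Z DW DX DZ : R -> R) (T : Rbar) :=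
  RC W /\ RC X /\ RC Z /\
  (forall t, 0 < t -> Rbar_lt t T -> is_derive W t (DW t) /\ is_derive X t (DX t) /\ is_derive Z t (DZ t)) /\
  (forall t, 0 < t -> Rbar_lt t T -> inbox (1/4) (W t) (X t) (Z t) ->
      DW t = fw c1 (W t) (X t) (Z t) /\ DX t = fx d A1 B1 (W t) (X t) (Z t) /\ DZ t = fz d A1 B1 (W t) (X t) (Z t)).

Lemma nrm3_inbox w x z r : nrm3 w x z < r -> inbox r w x z.
Proof.
  intros H. pose proof (nrm3_ge1 w x z). pose proof (nrm3_ge2 w x z). pose proof (nrm3_ge3 w x z).
  repeat split; lra.
Qed.

Lemma traj_stay c1 d A1 B1 W X Z DW DX DZ T rho :
  0 < d -> 0 < 1 - A1 - B1 -> 0 < rho -> rho <= rS d A1 B1 ->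
  Hyp_traj c1 d A1 B1 W X Z DW DX DZ T ->
  Vs (epsS d c1 A1 B1) d (W 0) (X 0) (Z 0) < mS d c1 A1 B1 * rho ^ 2 ->
  forall t, 0 <= t -> Rbar_lt t T ->
    Vs (epsS d c1 A1 B1) d (W t) (X t) (Z t) <= Vs (epsS d c1 A1 B1) d (W 0) (X 0) (Z 0) /\
    nrm3 (W t) (X t) (Z t) < rho.
Proof.
  intros Hd He Hr Hrr [RW [RX [RZ [HD HF]]]] H0.
  destruct (rS_props d A1 B1 Hd He) as [P1 [P2 P3]].
  set (eps := epsS d c1 A1 B1) in *.
  assert (Heps : 0 < eps) by (apply epsS_pos; auto).
  set (V := fun t => Vs eps d (W t) (X t) (Z t)).
  set (dV := fun t => 2 * eps * W t * DW t + 4 * d * X t * DX t + 2 * Z t * DZ t).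
  assert (Hb : forall t, 0 <= t -> Rbar_lt t T -> V t <= V 0).
  { apply (barrier V dV T (mS d c1 A1 B1 * rho ^ 2)).
    - apply RC_V; auto.
    - exact H0.
    - intros t Ht HT. destruct (HD t Ht HT) as [D1 [D2 D3]]. apply der_V; auto.
    - intros t Ht HT HV.
      pose proof (V_small d c1 A1 B1 rho _ _ _ Hd He Hr HV) as Hn.
      assert (Bx : inbox (rS d A1 B1) (W t) (X t) (Z t)) by (apply nrm3_inbox; lra).
      assert (B4 : inbox (1/4) (W t) (X t) (Z t)) by (apply nrm3_inbox; lra).
      destruct (HF t Ht HT B4) as [E1 [E2 E3]].
      unfold dV. rewrite E1, E2, E3.
      pose proof (lyap_stab d c1 A1 B1 (rS d A1 B1) (W t) (X t) (Z t) Hd He P2 P3 Bx) as L.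
      unfold dVs in L. fold eps in L.
      assert (0 <= cS d A1 B1) by (unfold cS; apply Rmin_glb; [lra|apply Rdiv_le_0_compat; lra]).
      pose proof (V_nonneg eps d (W t) (X t) (Z t) ltac:(lra) ltac:(lra)).
      assert (0 <= cS d A1 B1 * Vs eps d (W t) (X t) (Z t)) by (apply Rmult_le_pos; auto).
      lra. }
  intros t Ht HT. split. apply Hb; auto.
  apply V_small with d c1 A1 B1; auto. fold eps. eapply Rle_lt_trans; [apply Hb|]; auto.
Qed.

Lemma der_lin (c t : R) : is_derive (fun s => 1 + c * s) t c.
Proof.
  eapply der_eq. apply der_plus. apply (@is_derive_const R_AbsRing R_NormedModule).
  apply der_scal. apply (@is_derive_id R_AbsRing). simpl. unfold one, zero. simpl. ring.
Qed.

Lemma traj_decay c1 d A1 B1 W X Z DW DX DZ rho :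
  0 < d -> 0 < 1 - A1 - B1 -> 0 < rho -> rho <= rS d A1 B1 ->
  Hyp_traj c1 d A1 B1 W X Z DW DX DZ p_infty ->
  Vs (epsS d c1 A1 B1) d (W 0) (X 0) (Z 0) < mS d c1 A1 B1 * rho ^ 2 ->
  forall t, 0 <= t ->
    Vs (epsS d c1 A1 B1) d (W t) (X t) (Z t) * (1 + cS d A1 B1 * t) <= Vs (epsS d c1 A1 B1) d (W 0) (X 0) (Z 0).
Proof.
  intros Hd He Hr Hrr HH H0 t Ht.
  pose proof (traj_stay c1 d A1 B1 W X Z DW DX DZ p_infty rho Hd He Hr Hrr HH H0) as ST.
  destruct HH as [RW [RX [RZ [HD HF]]]].
  destruct (rS_props d A1 B1 Hd He) as [P1 [P2 P3]].
  set (eps := epsS d c1 A1 B1) in *.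
  assert (Heps : 0 < eps) by (apply epsS_pos; auto).
  set (c := cS d A1 B1).
  assert (Hc : 0 <= c) by (unfold c, cS; apply Rmin_glb; [lra|apply Rdiv_le_0_compat; lra]).
  set (V := fun t => Vs eps d (W t) (X t) (Z t)).
  set (dV := fun t => 2 * eps * W t * DW t + 4 * d * X t * DX t + 2 * Z t * DZ t).
  set (Phi := fun t => V t * (1 + c * t)).
  set (dPhi := fun t => dV t * (1 + c * t) + V t * c).
  assert (M : Phi t <= Phi 0).
  { apply (mono_dec Phi dPhi p_infty); auto; [| |exact I].
    - unfold Phi. apply RC_mult. apply RC_V; auto.
      apply RC_plus. apply RC_const. apply RC_mult. apply RC_const. apply RC_id.
    - intros s Hs _. destruct (HD s Hs I) as [D1 [D2 D3]]. split.
      + unfold Phi, dPhi. eapply der_eq. apply der_mult. apply der_V; eauto. apply der_lin. reflexivity.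
      + destruct (ST s ltac:(lra) I) as [_ Hn].
        assert (Bx : inbox (rS d A1 B1) (W s) (X s) (Z s)) by (apply nrm3_inbox; lra).
        assert (B4 : inbox (1/4) (W s) (X s) (Z s)) by (apply nrm3_inbox; lra).
        destruct (HF s Hs I B4) as [E1 [E2 E3]].
        pose proof (lyap_stab d c1 A1 B1 (rS d A1 B1) (W s) (X s) (Z s) Hd He P2 P3 Bx) as L.
        unfold dVs in L. fold eps in L. fold c in L.
        unfold dPhi, dV, V. rewrite E1, E2, E3.
        pose proof (V_nonneg eps d (W s) (X s) (Z s) ltac:(lra) ltac:(lra)) as VN.
        set (v := Vs eps d (W s) (X s) (Z s)) in *.
        set (q := 2 * eps * W s * fw c1 (W s) (X s) (Z s) + 4 * d * X s * fx d A1 B1 (W s) (X s) (Z s) +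
                  2 * Z s * fz d A1 B1 (W s) (X s) (Z s)) in *.
        assert (0 <= 1 + c * s) by nra.
        assert (q * (1 + c * s) <= - c * v * (1 + c * s)) by (apply Rmult_le_compat_r; auto).
        assert (0 <= c * c * s * v) by (repeat apply Rmult_le_pos; auto; lra).
        nra. }
  unfold Phi, V in M. rewrite Rmult_0_r, Rplus_0_r, Rmult_1_r in M. exact M.
Qed.

Lemma exist_sol c1 d A1 B1 rho w0 x0 z0 :
  0 < d -> 0 < 1 - A1 - B1 -> 0 < rho -> rho <= rS d A1 B1 ->
  Vs (epsS d c1 A1 B1) d w0 x0 z0 < mS d c1 A1 B1 * rho ^ 2 ->
  exists W X Z : R -> R, W 0 = w0 /\ X 0 = x0 /\ Z 0 = z0 /\ RC W /\ RC X /\ RC Z /\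
    (forall t, 0 <= t -> nrm3 (W t) (X t) (Z t) < rho) /\
    (forall t, 0 < t -> is_derive W t (fw c1 (W t) (X t) (Z t)) /\
                        is_derive X t (fx d A1 B1 (W t) (X t) (Z t)) /\
                        is_derive Z t (fz d A1 B1 (W t) (X t) (Z t))).
Proof.
  intros Hd He Hr Hrr HV.
  destruct (rS_props d A1 B1 Hd He) as [P1 [P2 P3]].
  destruct (Gsys_lip c1 d A1 B1) as [L [M HG]].
  set (init := fun i : nat => match i with O => w0 | S O => x0 | _ => z0 end).
  destruct (picard _ init L M HG) as [f [F0 [FC FD]]].
  set (W := f 0%nat). set (X := f 1%nat). set (Z := f 2%nat).
  assert (Hbox : forall t, inbox (1/4) (W t) (X t) (Z t) ->
     Gsys c1 d A1 B1 0 (W t) (X t) (Z t) = fw c1 (W t) (X t) (Z t) /\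
     Gsys c1 d A1 B1 1 (W t) (X t) (Z t) = fx d A1 B1 (W t) (X t) (Z t) /\
     Gsys c1 d A1 B1 2 (W t) (X t) (Z t) = fz d A1 B1 (W t) (X t) (Z t)).
  { intros t [B1' [B2 B3]]. simpl. rewrite !cl_id by auto. auto. }
  assert (HH : Hyp_traj c1 d A1 B1 W X Z
     (fun t => Gsys c1 d A1 B1 0 (W t) (X t) (Z t))
     (fun t => Gsys c1 d A1 B1 1 (W t) (X t) (Z t))
     (fun t => Gsys c1 d A1 B1 2 (W t) (X t) (Z t)) p_infty).
  { split; [|split; [|split; [|split]]].
    - apply RC_cont; apply FC.
    - apply RC_cont; apply FC.
    - apply RC_cont; apply FC.
    - intros t Ht _. split; [|split]; apply FD; auto.
    - intros t Ht _ Hb. apply Hbox; auto. }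
  assert (I0 : W 0 = w0 /\ X 0 = x0 /\ Z 0 = z0).
  { unfold W, X, Z. rewrite !F0. simpl. auto. }
  destruct I0 as [I1 [I2 I3]].
  rewrite <- I1, <- I2, <- I3 in HV.
  pose proof (traj_stay c1 d A1 B1 W X Z _ _ _ p_infty rho Hd He Hr Hrr HH HV) as ST.
  exists W, X, Z. split; [auto|split; [auto|split; [auto|]]].
  destruct HH as [RW [RX [RZ _]]]. split; [auto|split; [auto|split; [auto|split]]].
  - intros t Ht. apply ST; auto. exact I.
  - intros t Ht. destruct (ST t ltac:(lra) I) as [_ Hn].
    assert (B4 : inbox (1/4) (W t) (X t) (Z t)) by (apply nrm3_inbox; lra).
    destruct (Hbox t B4) as [E1 [E2 E3]]. rewrite <- E1, <- E2, <- E3.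
    split; [|split]; apply FD; auto.
Qed.

Lemma V_lower d c1 A1 B1 w x z : 0 < d -> 0 < 1 - A1 - B1 ->
  mS d c1 A1 B1 * w ^ 2 <= Vs (epsS d c1 A1 B1) d w x z /\
  mS d c1 A1 B1 * x ^ 2 <= Vs (epsS d c1 A1 B1) d w x z /\
  mS d c1 A1 B1 * z ^ 2 <= Vs (epsS d c1 A1 B1) d w x z.
Proof.
  intros Hd He. destruct (mS_le d c1 A1 B1) as [H1 [H2 H3]].
  pose proof (epsS_pos d c1 A1 B1 Hd He).
  set (m := mS d c1 A1 B1) in *. set (e := epsS d c1 A1 B1) in *.
  unfold Vs.
  pose proof (pow2_ge_0 w). pose proof (pow2_ge_0 x). pose proof (pow2_ge_0 z).
  assert (m * w ^ 2 <= e * w ^ 2) by (apply Rmult_le_compat_r; auto).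
  assert (m * x ^ 2 <= 2 * d * x ^ 2) by (apply Rmult_le_compat_r; auto).
  assert (m * z ^ 2 <= 1 * z ^ 2) by (apply Rmult_le_compat_r; auto).
  assert (0 <= 2 * d * x ^ 2) by (apply Rmult_le_pos; lra).
  assert (0 <= e * w ^ 2) by (apply Rmult_le_pos; lra).
  lra.
Qed.

Lemma init_small d c1 A1 B1 rho w x z : 0 < d -> 0 < 1 - A1 - B1 -> 0 < rho ->
  nrm3 w x z < rho * mS d c1 A1 B1 / (epsS d c1 A1 B1 + 2 * d + 1) ->
  Vs (epsS d c1 A1 B1) d w x z < mS d c1 A1 B1 * rho ^ 2.
Proof.
  intros Hd He Hr Hn.
  pose proof (epsS_pos d c1 A1 B1 Hd He). pose proof (mS_pos d c1 A1 B1 Hd He).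
  destruct (mS_le d c1 A1 B1) as [_ [_ H3]].
  pose proof (V_upper (epsS d c1 A1 B1) d w x z ltac:(lra) ltac:(lra)).
  set (m := mS d c1 A1 B1) in *. set (e := epsS d c1 A1 B1) in *.
  set (MM := e + 2 * d + 1) in *.
  pose proof (nrm3_ge0 w x z). set (n := nrm3 w x z) in *.
  assert (HMM : 1 <= MM) by (unfold MM; lra).
  assert (n ^ 2 < (rho * m / MM) ^ 2) by (assert (0 < rho * m / MM) by (apply Rdiv_lt_0_compat; nra); nra).
  assert (MM * n ^ 2 < MM * (rho * m / MM) ^ 2) by (apply Rmult_lt_compat_l; lra).
  assert (MM * (rho * m / MM) ^ 2 = rho ^ 2 * m * (m / MM)) by (field; lra).
  assert (m / MM <= 1).
  { apply Rmult_le_reg_r with MM. lra. unfold Rdiv. rewrite Rmult_assoc, Rinv_l by lra. lra. }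
  assert (rho ^ 2 * m * (m / MM) <= rho ^ 2 * m * 1).
  { apply Rmult_le_compat_l. apply Rmult_le_pos; [apply pow2_ge_0|lra]. auto. }
  lra.
Qed.

Lemma lim_from_decay (W : R -> R) (K c : R) : 0 < c ->
  (forall t, 0 <= t -> W t ^ 2 * (1 + c * t) <= K) -> is_lim W p_infty 0.
Proof.
  intros Hc H. apply is_lim_spec. simpl. intros eps.
  pose proof (cond_pos eps) as He.
  exists (Rmax 0 (K / (c * (eps * eps)))). intros t Ht.
  pose proof (Rmax_l 0 (K / (c * (eps * eps)))). pose proof (Rmax_r 0 (K / (c * (eps * eps)))).
  rewrite Rminus_0_r. apply Rnot_le_lt. intros Hc2.
  specialize (H t ltac:(lra)).
  assert (eps * eps <= Rabs (W t) * Rabs (W t)) by (apply Rmult_le_compat; lra).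
  assert (eps * eps <= W t ^ 2) by (rewrite <- (pow2_abs (W t)); simpl; lra).
  assert (eps * eps * (1 + c * t) <= W t ^ 2 * (1 + c * t)) by (apply Rmult_le_compat_r; nra).
  assert (0 < eps * eps) by nra. assert (c * (eps * eps) * t < K) by lra.
  assert (t < K / (c * (eps * eps))).
  { apply Rmult_lt_reg_l with (c * (eps * eps)). nra. unfold Rdiv.
    replace (c * (eps * eps) * (K * / (c * (eps * eps)))) with K by (field; nra). lra. }
  lra.
Qed.

Lemma der_aff (A B t : R) : is_derive (fun s => A + B * s) t B.
Proof.
  eapply der_eq. apply der_plus. apply (@is_derive_const R_AbsRing R_NormedModule).
  apply der_scal. apply (@is_derive_id R_AbsRing). simpl. unfold one, zero. simpl. ring.
Qed.

Lemma Fw_eq k1 k2 k3 d w x z : Fw k1 k2 k3 d w x z = fw (k1 * d) w x z.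
Proof. unfold Fw, fw. ring. Qed.
Lemma Fx_eq k1 k2 k3 d w x z : Fx k1 k2 k3 d w x z = fx d (alpha k1 k2 k3 * d / k1) (beta k1 k2 k3 * d) w x z.
Proof. reflexivity. Qed.
Lemma Fz_eq k1 k2 k3 d w x z : Fz k1 k2 k3 d w x z = fz d (alpha k1 k2 k3 * d / k1) (beta k1 k2 k3 * d) w x z.
Proof. unfold Fz, fz. unfold Rdiv. ring. Qed.

Lemma sol_hyp k1 k2 k3 d T w x z : is_solution k1 k2 k3 d T w x z ->
  Hyp_traj (k1 * d) d (alpha k1 k2 k3 * d / k1) (beta k1 k2 k3 * d) w x z
    (fun t => Fw k1 k2 k3 d (w t) (x t) (z t))
    (fun t => Fx k1 k2 k3 d (w t) (x t) (z t))
    (fun t => Fz k1 k2 k3 d (w t) (x t) (z t)) T.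
Proof.
  intros [_ [_ [RW [RX [RZ HD]]]]].
  split; [auto|split; [auto|split; [auto|split]]]. auto.
  intros t _ _ _. rewrite Fw_eq, Fx_eq, Fz_eq. auto.
Qed.

Lemma AB_sum k1 k2 k3 d : 0 < k1 -> 0 < k2 - k1 ^ 2 ->
  alpha k1 k2 k3 * d / k1 + beta k1 k2 k3 * d = d * (k2 - k1) / k1.
Proof. intros. unfold alpha, beta. field. lra. Qed.

Lemma stable_part k1 k2 k3 d : 0 < k1 -> 0 < k2 - k1 ^ 2 -> k1 < k2 -> 0 < d ->
  d < delta_c k1 k2 -> dfe_LAS k1 k2 k3 d.
Proof.
  intros Hk1 Hk2 Hk12 Hd Hdc.
  set (A1 := alpha k1 k2 k3 * d / k1). set (B1 := beta k1 k2 k3 * d). set (c1 := k1 * d).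
  assert (He : 0 < 1 - A1 - B1).
  { pose proof (AB_sum k1 k2 k3 d Hk1 Hk2) as E. fold A1 B1 in E.
    unfold delta_c in Hdc.
    assert (d * (k2 - k1) < k1).
    { apply Rmult_lt_reg_r with (/ (k2 - k1)). apply Rinv_0_lt_compat; lra.
      rewrite Rmult_assoc, Rinv_r by lra. lra. }
    assert (d * (k2 - k1) / k1 < 1).
    { apply Rmult_lt_reg_r with k1. lra. unfold Rdiv. rewrite Rmult_assoc, Rinv_l by lra. lra. }
    lra. }
  destruct (rS_props d A1 B1 Hd He) as [P1 [P2 P3]].
  pose proof (mS_pos d c1 A1 B1 Hd He) as Hm.
  pose proof (epsS_pos d c1 A1 B1 Hd He) as Hep.
  set (MM := epsS d c1 A1 B1 + 2 * d + 1).
  split.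
  - intros eps Heps.
    set (rho := Rmin eps (rS d A1 B1)).
    assert (Hr : 0 < rho) by (apply Rmin_glb_lt; lra).
    assert (Hr1 : rho <= eps) by apply Rmin_l.
    assert (Hr2 : rho <= rS d A1 B1) by apply Rmin_r.
    exists (rho * mS d c1 A1 B1 / MM). split.
    { apply Rdiv_lt_0_compat; unfold MM; nra. }
    intros w0 x0 z0 Hn.
    pose proof (init_small d c1 A1 B1 rho w0 x0 z0 Hd He Hr Hn) as HV.
    split.
    + destruct (exist_sol c1 d A1 B1 rho w0 x0 z0 Hd He Hr Hr2 HV)
        as [W [X [Z [I1 [I2 [I3 [RW [RX [RZ [Hb HD]]]]]]]]]].
      exists W, X, Z. split; [|auto].
      split; [exact I|split; [|split; [auto|split; [auto|split; [auto|]]]]].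
      * intros t Ht _. pose proof (Hb t Ht) as Hn'.
        pose proof (nrm3_ge2 (W t) (X t) (Z t)). pose proof (nrm3_ge3 (W t) (X t) (Z t)).
        assert (A : Rabs (X t) <= 1/8) by lra. assert (B : Rabs (Z t) <= 1/8) by lra.
        apply abs_le in A, B. lra.
      * intros t Ht _. rewrite Fw_eq, Fx_eq, Fz_eq. apply HD; auto.
    + intros T w x z Hsol E1 E2 E3 t Ht HT.
      pose proof (sol_hyp k1 k2 k3 d T w x z Hsol) as HH.
      rewrite <- E1, <- E2, <- E3 in HV.
      destruct (traj_stay c1 d A1 B1 w x z _ _ _ T rho Hd He Hr Hr2 HH HV t Ht HT) as [_ Hn'].
      lra.
  - exists (rS d A1 B1 * mS d c1 A1 B1 / MM). split.
    { apply Rdiv_lt_0_compat; unfold MM; nra. }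
    intros w x z Hsol Hn.
    pose proof (init_small d c1 A1 B1 (rS d A1 B1) _ _ _ Hd He P1 Hn) as HV.
    pose proof (sol_hyp k1 k2 k3 d p_infty w x z Hsol) as HH.
    pose proof (traj_decay c1 d A1 B1 w x z _ _ _ (rS d A1 B1) Hd He P1 (Rle_refl _) HH HV) as Dc.
    assert (Hc : 0 < cS d A1 B1).
    { unfold cS. apply Rmin_glb_lt. lra. apply Rdiv_lt_0_compat; lra. }
    set (V0 := Vs (epsS d c1 A1 B1) d (w 0) (x 0) (z 0)) in *.
    assert (G : forall f : R -> R, (forall t, mS d c1 A1 B1 * f t ^ 2 <= Vs (epsS d c1 A1 B1) d (w t) (x t) (z t)) ->
               is_lim f p_infty 0).
    { intros f Hf. apply lim_from_decay with (V0 / mS d c1 A1 B1) (cS d A1 B1); auto.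
      intros t Ht. specialize (Dc t Ht). specialize (Hf t).
      assert (0 <= 1 + cS d A1 B1 * t) by nra.
      apply Rmult_le_reg_l with (mS d c1 A1 B1); auto.
      replace (mS d c1 A1 B1 * (V0 / mS d c1 A1 B1)) with V0 by (field; lra).
      rewrite <- Rmult_assoc. eapply Rle_trans; [|apply Dc]. apply Rmult_le_compat_r; auto. }
    split; [|split]; apply G; intros t; apply (V_lower d c1 A1 B1 (w t) (x t) (z t) Hd He).
Qed.

Lemma RC_y (l : R) (X Z : R -> R) : RC X -> RC Z -> RC (fun t => yv l (X t) (Z t)).
Proof. intros. unfold yv. apply RC_plus; auto. apply RC_mult; auto. apply RC_const. Qed.

Lemma der_y (l : R) (X Z : R -> R) t a b : is_derive X t a -> is_derive Z t b ->
  is_derive (fun s => yv l (X s) (Z s)) t ((l + 2) * a + b).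
Proof. intros. unfold yv. apply der_plus; auto. apply der_scal; auto. Qed.

Lemma unstable_part k1 k2 k3 d : 0 < k1 -> 0 < k2 - k1 ^ 2 -> k1 < k2 -> 0 < d ->
  delta_c k1 k2 < d -> dfe_unstable k1 k2 k3 d.
Proof.
  intros Hk1 Hk2 Hk12 Hd Hdc Hst.
  set (A1 := alpha k1 k2 k3 * d / k1). set (B1 := beta k1 k2 k3 * d).
  assert (Hf : 0 < A1 + B1 - 1).
  { pose proof (AB_sum k1 k2 k3 d Hk1 Hk2) as E. fold A1 B1 in E.
    unfold delta_c in Hdc.
    assert (k1 < d * (k2 - k1)).
    { apply Rmult_lt_reg_r with (/ (k2 - k1)). apply Rinv_0_lt_compat; lra.
      rewrite Rmult_assoc, Rinv_r by lra. lra. }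
    assert (1 < d * (k2 - k1) / k1).
    { apply Rmult_lt_reg_r with k1. lra. unfold Rdiv. rewrite Rmult_assoc, Rinv_l by lra. lra. }
    lra. }
  set (a := -(d+1) + A1 + B1).
  set (disc := (a - 2) ^ 2 + 8 * (A1 + B1 - 1)).
  assert (Hdisc : 0 < disc) by (unfold disc; pose proof (pow2_ge_0 (a-2)); lra).
  set (s := sqrt disc).
  assert (Hs2 : s * s = disc) by (apply sqrt_sqrt; lra).
  assert (Hs0 : 0 < s) by (apply sqrt_lt_R0; auto).
  assert (Hsa : a - 2 < s /\ 2 - a < s).
  { assert ((a - 2) ^ 2 < s * s) by (rewrite Hs2; unfold disc; lra). split; nra. }
  set (lp := (a - 2 + s) / 2). set (lm := (a - 2 - s) / 2).
  assert (Hlp : 0 < lp) by (unfold lp; lra).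
  assert (Hlm : lm < 0) by (unfold lm; lra).
  assert (Hls : lp - lm = s) by (unfold lp, lm; field).
  assert (Cp : lp ^ 2 - ((-(d+1) + A1 + B1) - 2) * lp - 2 * ((-(d+1) + A1 + B1) + d) = 0).
  { fold a. replace (lp ^ 2 - (a - 2) * lp - 2 * (a + d)) with ((s * s - disc) / 4)
      by (unfold lp, disc, a; field). rewrite Hs2. field. }
  assert (Cm : lm ^ 2 - ((-(d+1) + A1 + B1) - 2) * lm - 2 * ((-(d+1) + A1 + B1) + d) = 0).
  { fold a. replace (lm ^ 2 - (a - 2) * lm - 2 * (a + d)) with ((s * s - disc) / 4)
      by (unfold lm, disc, a; field). rewrite Hs2. field. }
  set (mu := Rmin lp (- lm)).
  assert (Hmu : 0 < mu) by (apply Rmin_glb_lt; lra).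
  assert (Hmu1 : mu <= lp) by apply Rmin_l.
  assert (Hmu2 : mu <= - lm) by apply Rmin_r.
  set (Kp := Rabs (lp+2) * Kh A1 B1 + Kg A1 B1).
  set (Km := Rabs (lm+2) * Kh A1 B1 + Kg A1 B1).
  pose proof (Kh_nn A1 B1). pose proof (Kg_nn A1 B1).
  assert (HK : 0 <= (Kp + Km) * (1 + 2 / s ^ 2)).
  { assert (0 <= Kp) by (unfold Kp; pose proof (Rabs_pos (lp+2)); nra).
    assert (0 <= Km) by (unfold Km; pose proof (Rabs_pos (lm+2)); nra).
    assert (0 <= 2 / s ^ 2) by (apply Rdiv_le_0_compat; nra). nra. }
  set (K := (Kp + Km) * (1 + 2 / s ^ 2)) in *.
  set (rU := Rmin (1/8) (mu / (K + 1))).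
  assert (HrU : 0 < rU) by (apply Rmin_glb_lt; [lra|apply Rdiv_lt_0_compat; lra]).
  assert (HrU1 : rU <= 1/8) by apply Rmin_l.
  assert (HrU2 : rU * (Kp + Km) * (1 + 2 / s ^ 2) <= mu).
  { rewrite Rmult_assoc. fold K. apply Rle_trans with (mu / (K + 1) * K).
    apply Rmult_le_compat_r; auto. apply Rmin_r.
    apply Rle_trans with (mu / (K + 1) * (K + 1)). apply Rmult_le_compat_l. apply Rdiv_le_0_compat; lra. lra.
    right; field; lra. }
  destruct (Hst rU HrU) as [eta [Heta Hst2]].
  set (sg := eta / (2 * (1 + Rabs (lm + 2)))).
  pose proof (Rabs_pos (lm + 2)) as Hl2.
  assert (Hsg : 0 < sg) by (apply Rdiv_lt_0_compat; lra).
  assert (Hsg1 : sg * (2 * (1 + Rabs (lm + 2))) = eta) by (unfold sg; field; lra).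
  assert (Hn : nrm3 0 sg (- (lm + 2) * sg) < eta).
  { apply nrm3_lt. rewrite Rabs_R0; lra. rewrite Rabs_pos_eq; nra.
    rewrite Rabs_mult, Rabs_Ropp, (Rabs_pos_eq sg) by lra. nra. }
  destruct (Hst2 _ _ _ Hn) as [[W [X [Z [Hsol [I1 [I2 I3]]]]]] Hall].
  assert (Bd : forall t, 0 <= t -> nrm3 (W t) (X t) (Z t) < rU).
  { intros t Ht. apply (Hall p_infty W X Z Hsol I1 I2 I3 t Ht I). }
  destruct Hsol as [_ [_ [RW [RX [RZ HD]]]]].
  set (U := fun t => Ucf lp lm (X t) (Z t)).
  set (dU := fun t => dUcf d A1 B1 lp lm (W t) (X t) (Z t)).
  assert (DU : forall t, 0 < t -> is_derive U t (dU t) /\ mu * U t <= dU t /\ 0 <= dU t).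
  { intros t Ht. destruct (HD t Ht I) as [_ [DX DZ]].
    rewrite Fx_eq in DX. rewrite Fz_eq in DZ. fold A1 B1 in DX, DZ.
    assert (Hb : inbox rU (W t) (X t) (Z t)) by (apply nrm3_inbox; apply Bd; lra).
    pose proof (chetaev d A1 B1 lp lm s mu rU (W t) (X t) (Z t) Hlp Hlm Hls Hs0 Hmu Hmu1 Hmu2 Cp Cm
      ltac:(lra) HrU1 HrU2 Hb) as Ch.
    split; [|split].
    - unfold U, dU, Ucf, dUcf. eapply der_eq. apply der_minus; apply der_sq; apply der_y; eauto. reflexivity.
    - unfold U, Ucf. eapply Rle_trans; [|apply Ch].
      apply Rmult_le_compat_l. lra. pose proof (pow2_ge_0 (yv lm (X t) (Z t))). lra.
    - eapply Rle_trans; [|apply Ch]. apply Rmult_le_pos. lra.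
      pose proof (pow2_ge_0 (yv lm (X t) (Z t))). pose proof (pow2_ge_0 (yv lp (X t) (Z t))). lra. }
  assert (RU : RC U).
  { unfold U, Ucf. apply RC_minus; apply RC_pow; apply RC_y; auto. }
  assert (U0 : U 0 = (s * sg) ^ 2).
  { unfold U, Ucf, yv. rewrite I2, I3. rewrite <- Hls. ring. }
  assert (HU0 : 0 < U 0) by (rewrite U0; apply pow_lt; nra).
  assert (Mon : forall t, 0 <= t -> U 0 <= U t).
  { intros t Ht.
    assert (- U t <= - U 0).
    { apply (mono_dec (fun t => - U t) (fun t => - dU t) p_infty); auto; [| |exact I].
      - apply RC_ext with (fun t => 0 - U t). intros; ring. apply RC_minus; auto. apply RC_const.
      - intros v Hv _. destruct (DU v Hv) as [D1 [_ D3]]. split; [|lra].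
        apply (is_derive_ext (fun s => -1 * U s)). intros; simpl; ring.
        eapply der_eq. apply (der_scal (-1) U). exact D1. ring. }
    lra. }
  assert (Grow : forall t, 0 <= t -> U 0 + mu * U 0 * t <= U t).
  { intros t Ht.
    set (Hq := fun t => U 0 + mu * U 0 * t - U t).
    assert (HQ : Hq t <= Hq 0).
    { apply (mono_dec Hq (fun t => mu * U 0 - dU t) p_infty); auto; [| |exact I].
      - unfold Hq. apply RC_minus; auto. apply RC_plus. apply RC_const. apply RC_mult. apply RC_const. apply RC_id.
      - intros v Hv _. destruct (DU v Hv) as [D1 [D2 _]]. split.
        + unfold Hq. apply der_minus; auto. apply der_aff.
        + pose proof (Mon v ltac:(lra)). assert (mu * U 0 <= mu * U v) by (apply Rmult_le_compat_l; lra). lra. }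
    unfold Hq in HQ. lra. }
  set (Bd2 := ((Rabs (lp + 2) + 1) * rU) ^ 2).
  assert (Up : forall t, 0 <= t -> U t <= Bd2).
  { intros t Ht. pose proof (Bd t Ht) as Hb.
    pose proof (nrm3_ge2 (W t) (X t) (Z t)). pose proof (nrm3_ge3 (W t) (X t) (Z t)).
    unfold U, Ucf. pose proof (pow2_ge_0 (yv lm (X t) (Z t))).
    assert (Rabs (yv lp (X t) (Z t)) <= (Rabs (lp + 2) + 1) * rU).
    { unfold yv. eapply Rle_trans. apply Rabs_triang. rewrite Rabs_mult.
      assert (Rabs (lp + 2) * Rabs (X t) <= Rabs (lp + 2) * rU) by (apply Rmult_le_compat_l; [apply Rabs_pos|lra]).
      lra. }
    assert (yv lp (X t) (Z t) ^ 2 <= Bd2).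
    { unfold Bd2. rewrite <- (pow2_abs (yv lp (X t) (Z t))). apply pow_incr. split; auto. apply Rabs_pos. }
    lra. }
  set (t1 := Bd2 / (mu * U 0) + 1).
  assert (Hmu0 : 0 < mu * U 0) by nra.
  assert (HB : 0 <= Bd2) by apply pow2_ge_0.
  assert (Ht1 : 0 <= t1) by (unfold t1; pose proof (Rdiv_le_0_compat Bd2 (mu * U 0) HB Hmu0); lra).
  pose proof (Grow t1 Ht1). pose proof (Up t1 Ht1).
  assert (mu * U 0 * t1 = Bd2 + mu * U 0) by (unfold t1; field; lra).
  lra.
Qed.

Theorem mainTheorem1 (p : nat -> R) (k1 k2 k3 d : R) :
  degree_moments p k1 k2 k3 ->
  0 < k1 -> 0 < k2 - k1 ^ 2 -> k1 < k2 -> 0 < d ->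
  (d < delta_c k1 k2 -> dfe_LAS k1 k2 k3 d) /\
  (delta_c k1 k2 < d -> dfe_unstable k1 k2 k3 d).
Proof.
  intros _ Hk1 Hk2 Hk12 Hd. split.
  apply stable_part; auto. apply unstable_part; auto.
Qed.
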